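(* Let $0<\sigma\le 1$ and let $(u,m)$ be the classical solution of the system \[ \begin{cases} u_t + \frac{\sigma^2}{2} u_{xx} - ru + G(u_x,m)^2 = 0, & 0<t<T,\ 0<x<L,\\ m_t - \frac{\sigma^2}{2} m_{xx} - \{G(u_x,m)m\}_x = 0, & 0<t<T,\ 0<x<L,\\ m(0,x)=m_0(x),\quad u(T,x)=u_T(x), & 0\le x\le L,\\ u_x(t,0)=u_x(t,L)=0, & 0\le t\le T,\\ \frac{\sigma^2}{2} m_x(t,x) + G(u_x,m)m(t,x) = 0, & 0\le t\le T,\ x\in\{0,L\}, \end{cases} \] where $G(u_x,m)(t,x) := \frac12\left(b + c\int_0^L u_x(t,y)m(t,y)\,dy - u_x(t,x)\right)$. Then $\|u\|_{C^{1/3}([0,T]\times[0,L])}\le C$, where $C$ does not depend on $\sigma$.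
   Context: Standing setting: $L,T,r>0$ are constants, $\epsilon>0$, and $b=\frac{2}{2+\epsilon}$, $c=\frac{\epsilon}{2+\epsilon}$. The data satisfy: $u_T,m_0\in C^{2+\gamma}([0,L])$ for some $\gamma>0$; $u_T'(0)=u_T'(L)=0$ and $m_0(0)=m_0'(0)=m_0(L)=m_0'(L)=0$; $m_0$ is a probability density on $[0,L]$; $u_T\ge 0$. Constants may depend on $u_T,m_0,L,T,r,\epsilon$ but not on $\sigma\in(0,1]$. $C^{1/3}$ denotes the space of Hölder continuous functions with exponent $1/3$ (with its usual norm). *)

(* Defs.v *)
From Stdlib Require Import Reals Lra.
From Coquelicot Require Import Coquelicot.
Open Scope R_scope.

Definition in_rect (T L t x : R) : Prop := 0 <= t <= T /\ 0 <= x <= L.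

Definition cont_on_rect (T L : R) (f : R -> R -> R) : Prop :=
  forall t x, in_rect T L t x ->
    filterlim (fun p : R * R => f (fst p) (snd p))
      (within (fun p : R * R => in_rect T L (fst p) (snd p)) (locally (t, x)))
      (locally (f t x)).

Definition cont_on_seg (L : R) (g : R -> R) : Prop :=
  forall x, 0 <= x <= L ->
    filterlim g (within (fun y => 0 <= y <= L) (locally x)) (locally (g x)).

(* C^{2+gamma}([0,L]) with given first and second derivatives g1, g2:
   g, g1, g2 continuous on [0,L], g' = g1, g1' = g2 on (0,L)
   (hence at the endpoints g1, g2 are the one-sided derivatives), and g2 is
   gamma-Hoelder on [0,L]. *)
Definition C2gamma (L gamma : R) (g g1 g2 : R -> R) : Prop :=
  cont_on_seg L g /\ cont_on_seg L g1 /\ cont_on_seg L g2 /\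
  (forall x, 0 < x < L -> is_derive g x (g1 x)) /\
  (forall x, 0 < x < L -> is_derive g1 x (g2 x)) /\
  exists K, forall x y, 0 <= x <= L -> 0 <= y <= L ->
    Rabs (g2 x - g2 y) <= K * Rpower (Rabs (x - y)) gamma.

Definition Gfun (b c L : R) (ux m : R -> R -> R) (t x : R) : R :=
  / 2 * (b + c * RInt (fun y => ux t y * m t y) 0 L - ux t x).

Definition classical_solution (L T r eps sigma : R) (uT m0 : R -> R)
    (u m : R -> R -> R) : Prop :=
  let b := 2 / (2 + eps) in
  let c := eps / (2 + eps) in
  exists ut ux uxx mt mx mxx : R -> R -> R,
    cont_on_rect T L u /\ cont_on_rect T L ut /\ cont_on_rect T L ux /\
    cont_on_rect T L uxx /\
    cont_on_rect T L m /\ cont_on_rect T L mt /\ cont_on_rect T L mx /\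
    cont_on_rect T L mxx /\
    (forall t x, 0 < t < T -> 0 < x < L ->
       is_derive (fun s => u s x) t (ut t x) /\
       is_derive (fun y => u t y) x (ux t x) /\
       is_derive (fun y => ux t y) x (uxx t x) /\
       is_derive (fun s => m s x) t (mt t x) /\
       is_derive (fun y => m t y) x (mx t x) /\
       is_derive (fun y => mx t y) x (mxx t x)) /\
    (forall t x, 0 < t < T -> 0 < x < L ->
       ut t x + sigma ^ 2 / 2 * uxx t x - r * u t x
         + (Gfun b c L ux m t x) ^ 2 = 0) /\
    (forall t x, 0 < t < T -> 0 < x < L ->
       is_derive (fun y => Gfun b c L ux m t y * m t y) x
         (mt t x - sigma ^ 2 / 2 * mxx t x)) /\
    (forall x, 0 <= x <= L -> m 0 x = m0 x /\ u T x = uT x) /\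
    (forall t, 0 <= t <= T -> ux t 0 = 0 /\ ux t L = 0) /\
    (forall t, 0 <= t <= T ->
       sigma ^ 2 / 2 * mx t 0 + Gfun b c L ux m t 0 * m t 0 = 0 /\
       sigma ^ 2 / 2 * mx t L + Gfun b c L ux m t L * m t L = 0).

Definition dist2 (t x s y : R) : R := sqrt ((t - s) ^ 2 + (x - y) ^ 2).

Definition holder13_norm (T L : R) (u : R -> R -> R) : Rbar :=
  Rbar_plus
    (Lub_Rbar (fun v => exists t x, in_rect T L t x /\ v = Rabs (u t x)))
    (Lub_Rbar (fun v => exists t x s y, in_rect T L t x /\ in_rect T L s y /\
        (t, x) <> (s, y) /\
        v = Rabs (u t x - u s y) / Rpower (dist2 t x s y) (1 / 3))).

(* Main.v *)
Require Import Defs.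
From Stdlib Require Import Reals Lra ClassicalEpsilon Classical.
From Coquelicot Require Import Coquelicot.
Open Scope R_scope.

Lemma ball_R (x e y : R) : ball x e y <-> Rabs (y - x) < e.
Proof. unfold ball; simpl; unfold AbsRing_ball, abs, minus, plus, opp; simpl. tauto. Qed.

Definition clamp (a b x : R) := Rmax a (Rmin b x).

Lemma clamp_in a b x : a <= b -> a <= clamp a b x <= b.
Proof. intros. unfold clamp, Rmax, Rmin. repeat destruct Rle_dec; lra. Qed.

Lemma clamp_id a b x : a <= x <= b -> clamp a b x = x.
Proof. intros. unfold clamp, Rmax, Rmin. repeat destruct Rle_dec; lra. Qed.

Lemma clamp_lip a b x y : a <= b -> Rabs (clamp a b x - clamp a b y) <= Rabs (x - y).
Proof. intros. unfold clamp, Rmax, Rmin. repeat destruct Rle_dec; unfold Rabs; repeat destruct Rcase_abs; lra. Qed.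

Lemma continuity_pt_ed (f : R -> R) x :
  (forall eps, 0 < eps -> exists d, 0 < d /\ forall y, Rabs (y - x) < d -> Rabs (f y - f x) < eps) ->
  continuity_pt f x.
Proof.
  intros H. apply continuity_pt_filterlim. apply filterlim_locally. intros [e He].
  destruct (H e He) as [d [Hd Hy]]. exists (mkposreal d Hd). intros y Hb.
  apply ball_R. apply Hy. apply ball_R in Hb. exact Hb.
Qed.

Definition cseg (a b : R) (f : R -> R) (z : R) :=
  forall eps, 0 < eps -> exists d, 0 < d /\ forall w, a <= w <= b -> Rabs (w - z) < d -> Rabs (f w - f z) < eps.

Lemma cseg_clamp a b f z : a <= b -> a <= z <= b -> cseg a b f z -> continuity_pt (fun x => f (clamp a b x)) z.
Proof.
  intros Hab Hz H. apply continuity_pt_ed. intros eps He.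
  destruct (H eps He) as [d [Hd Hw]]. exists d. split; auto. intros y Hy.
  rewrite (clamp_id a b z Hz). apply Hw. apply clamp_in; auto.
  pose proof (clamp_lip a b y z Hab). rewrite (clamp_id a b z Hz) in H0. lra.
Qed.

Lemma evt1 (f : R -> R) a b : a <= b -> (forall z, a <= z <= b -> cseg a b f z) ->
  exists z, a <= z <= b /\ forall w, a <= w <= b -> f w <= f z.
Proof.
  intros Hab H.
  destruct (continuity_ab_maj (fun x => f (clamp a b x)) a b Hab) as [M [HM HMi]].
  { intros c Hc. apply cseg_clamp; auto. }
  exists M. split; auto. intros w Hw. specialize (HM w Hw). simpl in HM.
  rewrite !clamp_id in HM; auto.
Qed.

Lemma evt_prod {X : Type} (K : X -> Prop) (F : R -> X -> R) a b : a <= b ->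
  (forall t, a <= t <= b -> exists k, K k /\ forall k', K k' -> F t k' <= F t k) ->
  (forall eps, 0 < eps -> exists d, 0 < d /\ forall t t' k, a <= t <= b -> a <= t' <= b ->
      Rabs (t - t') < d -> K k -> Rabs (F t k - F t' k) < eps) ->
  exists t k, a <= t <= b /\ K k /\ forall t' k', a <= t' <= b -> K k' -> F t' k' <= F t k.
Proof.
  intros Hab Hmax Huc.
  assert (Hch : forall t, exists k, a <= t <= b -> K k /\ forall k', K k' -> F t k' <= F t k).
  { intros t. destruct (classic (a <= t <= b)) as [Ht|Ht].
    - destruct (Hmax t Ht) as [k Hk]. exists k; auto.
    - destruct (Hmax a (conj (Rle_refl a) Hab)) as [k Hk]. exists k; intros; contradiction. }
  set (kf := fun t => proj1_sig (constructive_indefinite_description _ (Hch t))).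
  assert (Hkf : forall t, a <= t <= b -> K (kf t) /\ forall k', K k' -> F t k' <= F t (kf t)).
  { intros t Ht. exact (proj2_sig (constructive_indefinite_description _ (Hch t)) Ht). }
  destruct (evt1 (fun t => F t (kf t)) a b Hab) as [z [Hz Hzm]].
  { intros z Hz eps He. destruct (Huc eps He) as [d [Hd Hu]]. exists d; split; auto.
    intros w Hw Hwz.
    destruct (Hkf w Hw) as [Kw Mw]. destruct (Hkf z Hz) as [Kz Mz].
    pose proof (Mw (kf z) Kz). pose proof (Mz (kf w) Kw).
    pose proof (Hu w z (kf z) Hw Hz Hwz Kz).
    assert (Rabs (z - w) < d) by (rewrite Rabs_minus_sym; auto).
    pose proof (Hu z w (kf w) Hz Hw H2 Kw).
    unfold Rabs in *. repeat destruct Rcase_abs; lra. }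
  exists z, (kf z). destruct (Hkf z Hz) as [Kz Mz]. split; auto. split; auto.
  intros t' k' Ht' Kk'. destruct (Hkf t' Ht') as [Kt Mt].
  pose proof (Mt k' Kk'). pose proof (Hzm t' Ht'). simpl in H0. lra.
Qed.

Definition UC (a b c d : R) (f : R -> R -> R) := forall eps, 0 < eps -> exists delta, 0 < delta /\
  forall t x s y, a <= t <= b -> c <= x <= d -> a <= s <= b -> c <= y <= d ->
   Rabs (t - s) < delta -> Rabs (x - y) < delta -> Rabs (f t x - f s y) < eps.

Definition UC3 (a b c d e g : R) (f : R -> R -> R -> R) := forall eps, 0 < eps -> exists delta, 0 < delta /\
  forall t x y t' x' y', a <= t <= b -> c <= x <= d -> e <= y <= g ->
   a <= t' <= b -> c <= x' <= d -> e <= y' <= g ->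
   Rabs (t - t') < delta -> Rabs (x - x') < delta -> Rabs (y - y') < delta ->
   Rabs (f t x y - f t' x' y') < eps.

Lemma evt2 (F : R -> R -> R) a b c d : a <= b -> c <= d -> UC a b c d F ->
  exists t x, a <= t <= b /\ c <= x <= d /\ forall t' x', a <= t' <= b -> c <= x' <= d -> F t' x' <= F t x.
Proof.
  intros Hab Hcd HU.
  apply (evt_prod (fun x => c <= x <= d) F a b Hab).
  - intros t Ht. apply evt1; auto. intros z Hz eps He. destruct (HU eps He) as [dl [Hd H]].
    exists dl; split; auto. intros w Hw Hwz. apply H; auto. rewrite Rminus_eq_0, Rabs_R0; auto.
  - intros eps He. destruct (HU eps He) as [dl [Hd H]]. exists dl; split; auto.
    intros t t' k Ht Ht' Htt Hk. apply H; auto. rewrite Rminus_eq_0, Rabs_R0; auto.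
Qed.

Lemma evt3 (F : R -> R -> R -> R) a b c d e g : a <= b -> c <= d -> e <= g -> UC3 a b c d e g F ->
  exists t x y, a <= t <= b /\ c <= x <= d /\ e <= y <= g /\
   forall t' x' y', a <= t' <= b -> c <= x' <= d -> e <= y' <= g -> F t' x' y' <= F t x y.
Proof.
  intros Hab Hcd Heg HU.
  destruct (evt_prod (fun p : R * R => c <= fst p <= d /\ e <= snd p <= g) (fun t p => F t (fst p) (snd p)) a b Hab)
    as [t [[x y] [Ht [[Hx Hy] Hm]]]].
  - intros t Ht. destruct (evt2 (F t) c d e g Hcd Heg) as [x [y [Hx [Hy Hm]]]].
    + intros eps He. destruct (HU eps He) as [dl [Hd H]]. exists dl; split; auto.
      intros. apply H; auto. rewrite Rminus_eq_0, Rabs_R0; auto.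
    + exists (x, y). simpl. split; auto. intros [x' y'] [Hx' Hy']. simpl. auto.
  - intros eps He. destruct (HU eps He) as [dl [Hd H]]. exists dl; split; auto.
    intros t t' [x y] Ht Ht' Htt [Hx Hy]. simpl. apply H; auto; rewrite Rminus_eq_0, Rabs_R0; auto.
  - exists t, x, y. simpl in *. repeat split; auto; try lra. intros t' x' y' H1 H2 H3. apply (Hm t' (x', y')); simpl; auto.
Qed.

Lemma cont_rect_ed T L f : cont_on_rect T L f -> forall t x, in_rect T L t x ->
  forall eps, 0 < eps -> exists d, 0 < d /\ forall s y, in_rect T L s y -> Rabs (s - t) < d -> Rabs (y - x) < d ->
  Rabs (f s y - f t x) < eps.
Proof.
  intros Hc t x Hin eps He. specialize (Hc t x Hin).
  specialize (Hc (fun z => ball (f t x) eps z) (locally_ball (f t x) (mkposreal eps He))).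
  unfold filtermap, within in Hc. destruct Hc as [[d Hd] Hb]. exists d; split; auto. intros s y Hsy Hs Hy.
  specialize (Hb (s, y)). simpl in Hb. apply ball_R. apply Hb; auto.
  split; apply ball_R; auto.
Qed.

Lemma cont_rect_UC T L f : 0 <= T -> 0 <= L -> cont_on_rect T L f -> UC 0 T 0 L f.
Proof.
  intros HT HL Hc eps He.
  set (g := fun u v => f (clamp 0 T u) (clamp 0 L v)).
  assert (Hg : forall x y, 0 <= x <= T -> 0 <= y <= L -> continuity_2d_pt g x y).
  { intros x y Hx Hy e. destruct (cont_rect_ed T L f Hc x y (conj Hx Hy) e (cond_pos e)) as [d [Hd H]].
    exists (mkposreal d Hd). intros u v Hu Hv. unfold g. simpl in *.
    rewrite (clamp_id 0 T x Hx), (clamp_id 0 L y Hy).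
    apply H. split; apply clamp_in; auto.
    pose proof (clamp_lip 0 T u x HT). rewrite (clamp_id 0 T x Hx) in H0. lra.
    pose proof (clamp_lip 0 L v y HL). rewrite (clamp_id 0 L y Hy) in H0. lra. }
  destruct (uniform_continuity_2d g 0 T 0 L Hg (mkposreal eps He)) as [[d Hd] H].
  exists d; split; auto. intros t x s y Ht Hx Hs Hy Hts Hxy.
  specialize (H s y t x Hs Hy Ht Hx Hts Hxy). unfold g in H. simpl in H.
  rewrite !clamp_id in H; auto.
Qed.

Lemma UC_sub a b c d a' b' c' d' f : a <= a' -> b' <= b -> c <= c' -> d' <= d -> UC a b c d f -> UC a' b' c' d' f.
Proof.
  intros H1 H2 H3 H4 HU eps He. destruct (HU eps He) as [dl [Hd H]]. exists dl; split; auto.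
  intros. apply H; auto; lra.
Qed.

Lemma UC_plus a b c d f g : UC a b c d f -> UC a b c d g -> UC a b c d (fun t x => f t x + g t x).
Proof.
  intros Hf Hg eps He. destruct (Hf (eps/2)) as [d1 [Hd1 H1]]; [lra|].
  destruct (Hg (eps/2)) as [d2 [Hd2 H2]]; [lra|].
  exists (Rmin d1 d2); split. apply Rmin_glb_lt; auto.
  intros t x s y Ht Hx Hs Hy Hts Hxy.
  pose proof (Rmin_l d1 d2); pose proof (Rmin_r d1 d2).
  assert (Rabs (t - s) < d1) by lra.
  assert (Rabs (t - s) < d2) by lra.
  assert (Rabs (x - y) < d1) by lra.
  assert (Rabs (x - y) < d2) by lra.
  specialize (H1 t x s y Ht Hx Hs Hy H3 H5). specialize (H2 t x s y Ht Hx Hs Hy H4 H6).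
  unfold Rabs in *. repeat destruct Rcase_abs; lra.
Qed.

Lemma UC_opp a b c d f : UC a b c d f -> UC a b c d (fun t x => - f t x).
Proof.
  intros Hf eps He. destruct (Hf eps He) as [dl [Hd H]]. exists dl; split; auto.
  intros. replace (- f t x - - f s y) with (- (f t x - f s y)) by ring. rewrite Rabs_Ropp. apply H; auto.
Qed.

Lemma deriv_right (f : R -> R) x d : is_derive f x d -> 0 < d ->
  forall e, 0 < e -> exists y, x < y < x + e /\ f x < f y.
Proof.
  intros Hd Hpos e He. apply is_derive_Reals in Hd.
  destruct (Hd d Hpos) as [[dl Hdl] H]. simpl in H.
  set (h := Rmin (dl/2) (e/2)).
  assert (Hh : 0 < h) by (apply Rmin_glb_lt; lra).
  assert (Hh1 : h <= dl/2) by apply Rmin_l. assert (Hh2 : h <= e/2) by apply Rmin_r.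
  specialize (H h (Rgt_not_eq _ _ Hh)). rewrite Rabs_pos_eq in H by lra.
  specialize (H ltac:(lra)).
  exists (x + h). split. lra.
  assert (Hq : 0 < (f (x + h) - f x) / h) by (unfold Rabs in H; destruct Rcase_abs in H; lra).
  assert (0 < f (x + h) - f x).
  { replace (f (x+h) - f x) with ((f (x + h) - f x) / h * h) by (field; lra). apply Rmult_lt_0_compat; lra. }
  lra.
Qed.

Lemma deriv_left (f : R -> R) x d : is_derive f x d -> d < 0 ->
  forall e, 0 < e -> exists y, x - e < y < x /\ f x < f y.
Proof.
  intros Hd Hneg e He. apply is_derive_Reals in Hd.
  destruct (Hd (-d) ltac:(lra)) as [[dl Hdl] H]. simpl in H.
  set (h := Rmin (dl/2) (e/2)).
  assert (Hh : 0 < h) by (apply Rmin_glb_lt; lra).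
  assert (Hh1 : h <= dl/2) by apply Rmin_l. assert (Hh2 : h <= e/2) by apply Rmin_r.
  assert (Hn : -h <> 0) by lra.
  specialize (H (-h) Hn). rewrite Rabs_Ropp, Rabs_pos_eq in H by lra.
  specialize (H ltac:(lra)).
  exists (x + - h). split. lra.
  assert (Hq : (f (x + - h) - f x) / (- h) < 0) by (unfold Rabs in H; destruct Rcase_abs in H; lra).
  assert (0 < f (x + - h) - f x).
  { replace (f (x + - h) - f x) with (- ((f (x + - h) - f x) / (- h)) * h) by (field; lra). apply Rmult_lt_0_compat; lra. }
  lra.
Qed.

Lemma interior_max (f f1 : R -> R) f2 a b x : a < x < b ->
  (forall y, a < y < b -> is_derive f y (f1 y)) -> is_derive f1 x f2 ->
  (forall y, a < y < b -> f y <= f x) -> f1 x = 0 /\ f2 <= 0.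
Proof.
  intros Hx Hd1 Hd2 Hm.
  assert (H1 : f1 x = 0).
  { destruct (Rtotal_order (f1 x) 0) as [Hl|[He|Hg]]; auto.
    - destruct (deriv_left f x (f1 x) (Hd1 x Hx) Hl (x - a) ltac:(lra)) as [y [Hy Hf]].
      specialize (Hm y ltac:(lra)). lra.
    - destruct (deriv_right f x (f1 x) (Hd1 x Hx) Hg (b - x) ltac:(lra)) as [y [Hy Hf]].
      specialize (Hm y ltac:(lra)). lra. }
  split; auto.
  destruct (Rle_or_lt f2 0) as [Hle|Hgt]; auto. exfalso.
  pose proof Hd2 as Hd2'. apply is_derive_Reals in Hd2.
  destruct (Hd2 f2 Hgt) as [[dl Hdl] H]. simpl in H.
  set (h := Rmin (dl/2) ((b - x)/2)).
  assert (Hh : 0 < h) by (apply Rmin_glb_lt; lra).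
  assert (Hh1 : h <= dl/2) by apply Rmin_l. assert (Hh2 : h <= (b - x)/2) by apply Rmin_r.
  assert (Hpos : forall k, 0 < k <= h -> 0 < f1 (x + k)).
  { intros k Hk. specialize (H k ltac:(lra)). rewrite Rabs_pos_eq in H by lra. specialize (H ltac:(lra)).
    rewrite H1, Rminus_0_r in H.
    assert (0 < f1 (x + k) / k) by (unfold Rabs in H; destruct Rcase_abs in H; lra).
    replace (f1 (x + k)) with (f1 (x + k) / k * k) by (field; lra). apply Rmult_lt_0_compat; lra. }
  destruct (MVT_cor2 f f1 x (x + h) ltac:(lra)) as [c [Hc Hci]].
  { intros c Hc. apply is_derive_Reals. apply Hd1. lra. }
  assert (0 < f1 c) by (replace c with (x + (c - x)) by ring; apply Hpos; lra).
  specialize (Hm (x + h) ltac:(lra)).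
  assert (0 < f1 c * (x + h - x)) by (apply Rmult_lt_0_compat; lra). lra.
Qed.

Lemma cseg_sub a b a' b' f z : a <= a' -> b' <= b -> cseg a b f z -> cseg a' b' f z.
Proof. intros H1 H2 H eps He. destruct (H eps He) as [d [Hd Hw]]. exists d; split; auto. intros w Hw' Hwz. apply Hw; auto; lra. Qed.

Lemma MVT_open (f f1 : R -> R) a b : a < b -> (forall z, a <= z <= b -> cseg a b f z) ->
  (forall x, a < x < b -> is_derive f x (f1 x)) -> exists c, a < c < b /\ f b - f a = f1 c * (b - a).
Proof.
  intros Hab Hc Hd.
  set (g := fun x => f (clamp a b x)).
  assert (Hgd : forall c, a < c < b -> is_derive g c (f1 c)).
  { intros c Hcc. apply (is_derive_ext_loc f). 
    - set (r := Rmin (c - a) (b - c)). assert (Hr : 0 < r) by (apply Rmin_glb_lt; lra).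
      exists (mkposreal r Hr). intros y Hy. change (Rabs (y - c) < r) in Hy.
      assert (r <= c - a) by apply Rmin_l. assert (r <= b - c) by apply Rmin_r.
      unfold g. assert (a <= y <= b) by (unfold Rabs in Hy; destruct (Rcase_abs (y - c)) in Hy; split; lra).
      rewrite (clamp_id a b y); auto.
    - apply Hd; auto. }
  assert (pr1 : forall c, a < c < b -> derivable_pt g c).
  { intros c Hcc. apply ex_derive_Reals_0. exists (f1 c). apply Hgd; auto. }
  assert (pr2 : forall c, a < c < b -> derivable_pt id c) by (intros; apply derivable_pt_id).
  destruct (MVT g id a b pr1 pr2 Hab) as [c [P Hm]].
  - intros c Hcc. apply cseg_clamp; auto. lra.
  - intros c Hcc. apply continuity_pt_ed. intros eps He. exists eps; split; auto.
  - exists c. split; auto.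
    rewrite (derive_pt_eq_0 g c (f1 c) (pr1 c P)) in Hm by (apply is_derive_Reals; apply Hgd; auto).
    assert (Hid : derive_pt id c (pr2 c P) = 1).
    { apply derive_pt_eq_0. apply is_derive_Reals. unfold id. apply (is_derive_id c). }
    rewrite Hid in Hm. unfold g, id in Hm. rewrite !clamp_id in Hm by lra. lra.
Qed.

Lemma bd_left (f f1 : R -> R) a b : a < b -> (forall z, a <= z <= b -> cseg a b f z) ->
  (forall x, a < x < b -> is_derive f x (f1 x)) -> (exists d, 0 < d /\ forall y, a < y < a + d -> 0 < f1 y) ->
  exists y, a < y < b /\ f a < f y.
Proof.
  intros Hab Hc Hd [d [Hdp Hp]].
  set (y := Rmin (a + d/2) ((a + b)/2)).
  assert (y <= a + d/2) by apply Rmin_l. assert (y <= (a+b)/2) by apply Rmin_r.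
  assert (a < y) by (apply Rmin_glb_lt; lra).
  destruct (MVT_open f f1 a y H1) as [c [Hc1 Hc2]].
  - intros z Hz. apply (cseg_sub a b); try lra. apply Hc; lra.
  - intros x Hx. apply Hd; lra.
  - exists y. split. lra. assert (0 < f1 c) by (apply Hp; lra).
    assert (0 < f1 c * (y - a)) by (apply Rmult_lt_0_compat; lra). lra.
Qed.

Lemma bd_right (f f1 : R -> R) a b : a < b -> (forall z, a <= z <= b -> cseg a b f z) ->
  (forall x, a < x < b -> is_derive f x (f1 x)) -> (exists d, 0 < d /\ forall y, b - d < y < b -> f1 y < 0) ->
  exists y, a < y < b /\ f b < f y.
Proof.
  intros Hab Hc Hd [d [Hdp Hp]].
  set (y := Rmax (b - d/2) ((a + b)/2)).
  assert (b - d/2 <= y) by apply Rmax_l. assert ((a+b)/2 <= y) by apply Rmax_r.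
  assert (y < b) by (apply Rmax_lub_lt; lra).
  destruct (MVT_open f f1 y b H1) as [c [Hc1 Hc2]].
  - intros z Hz. apply (cseg_sub a b); try lra. apply Hc; lra.
  - intros x Hx. apply Hd; lra.
  - exists y. split. lra. assert (f1 c < 0) by (apply Hp; lra).
    assert (0 < - f1 c * (b - y)) by (apply Rmult_lt_0_compat; lra). lra.
Qed.

Lemma closure_le (f : R -> R) a b p c : a < b -> a <= p <= b -> cseg a b f p ->
  (forall z, a < z < b -> f z <= c) -> f p <= c.
Proof.
  intros Hab Hp Hc Hz. destruct (Rle_or_lt (f p) c) as [H|H]; auto. exfalso.
  destruct (Hc (f p - c) ltac:(lra)) as [d [Hd Hw]].
  set (e := Rmin (d/2) ((b - a)/4)).
  assert (e <= d/2) by apply Rmin_l. assert (e <= (b-a)/4) by apply Rmin_r.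
  assert (0 < e) by (apply Rmin_glb_lt; lra).
  destruct (Rle_or_lt p ((a+b)/2)) as [Hl|Hl].
  - specialize (Hw (p + e) ltac:(lra)). replace (p + e - p) with e in Hw by ring.
    rewrite Rabs_pos_eq in Hw by lra. specialize (Hw ltac:(lra)). specialize (Hz (p + e) ltac:(lra)).
    unfold Rabs in Hw; destruct Rcase_abs in Hw; lra.
  - specialize (Hw (p - e) ltac:(lra)). replace (p - e - p) with (- e) in Hw by ring.
    rewrite Rabs_Ropp, Rabs_pos_eq in Hw by lra. specialize (Hw ltac:(lra)). specialize (Hz (p - e) ltac:(lra)).
    unfold Rabs in Hw; destruct Rcase_abs in Hw; lra.
Qed.

Lemma UC_cseg a b c d W t z : UC a b c d W -> a <= t <= b -> c <= z <= d -> cseg c d (W t) z.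
Proof.
  intros HU Ht Hz eps He. destruct (HU eps He) as [dl [Hd H]]. exists dl; split; auto.
  intros w Hw Hwz. apply H; auto. rewrite Rminus_eq_0, Rabs_R0; auto.
Qed.

Lemma UC_cseg_t a b c d W t z : UC a b c d W -> a <= t <= b -> c <= z <= d -> cseg a b (fun s => W s z) t.
Proof.
  intros HU Ht Hz eps He. destruct (HU eps He) as [dl [Hd H]]. exists dl; split; auto.
  intros w Hw Hwz. apply H; auto. rewrite Rminus_eq_0, Rabs_R0; auto.
Qed.

Lemma pos_near_left (g : R -> R) c d : c < d -> cseg c d g c -> 0 < g c ->
  exists e, 0 < e /\ forall y, c < y < c + e -> 0 < g y.
Proof.
  intros Hcd Hc Hg. destruct (Hc (g c) Hg) as [e [He H]]. exists (Rmin e (d - c)). split.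
  apply Rmin_glb_lt; lra. intros y Hy. pose proof (Rmin_l e (d - c)). pose proof (Rmin_r e (d - c)).
  specialize (H y ltac:(lra)). rewrite Rabs_pos_eq in H by lra. specialize (H ltac:(lra)).
  unfold Rabs in H; destruct Rcase_abs in H; lra.
Qed.

Lemma neg_near_right (g : R -> R) c d : c < d -> cseg c d g d -> g d < 0 ->
  exists e, 0 < e /\ forall y, d - e < y < d -> g y < 0.
Proof.
  intros Hcd Hc Hg. destruct (Hc (- g d) ltac:(lra)) as [e [He H]]. exists (Rmin e (d - c)). split.
  apply Rmin_glb_lt; lra. intros y Hy. pose proof (Rmin_l e (d - c)). pose proof (Rmin_r e (d - c)).
  specialize (H y ltac:(lra)). rewrite Rabs_left in H by lra. specialize (H ltac:(lra)).
  unfold Rabs in H; destruct Rcase_abs in H; lra.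
Qed.

Lemma maxprin_back (L t0 t1 : R) (W Wt Wx Wxx : R -> R -> R) :
  t0 < t1 -> 0 < L ->
  UC t0 t1 0 L W -> UC t0 t1 0 L Wx ->
  (forall s x, t0 <= s < t1 -> 0 < x < L -> is_derive (fun s => W s x) s (Wt s x)) ->
  (forall s x, t0 <= s < t1 -> 0 < x < L -> is_derive (W s) x (Wx s x)) ->
  (forall s x, t0 <= s < t1 -> 0 < x < L -> is_derive (Wx s) x (Wxx s x)) ->
  (forall x, 0 <= x <= L -> W t1 x <= 0) ->
  (forall s, t0 <= s < t1 -> 0 < W s 0 -> 0 < Wx s 0) ->
  (forall s, t0 <= s < t1 -> 0 < W s L -> Wx s L < 0) ->
  (forall s x, t0 <= s < t1 -> 0 < x < L -> 0 < W s x -> Wx s x = 0 -> Wxx s x <= 0 -> 0 < Wt s x) ->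
  forall s x, t0 <= s <= t1 -> 0 <= x <= L -> W s x <= 0.
Proof.
  intros Ht HL HU HUx Hdt Hdx Hdxx Hterm Hb0 HbL Hint s x Hs Hx.
  destruct (evt2 W t0 t1 0 L ltac:(lra) ltac:(lra) HU) as [ts [xs [Hts [Hxs Hm]]]].
  destruct (Rle_or_lt (W ts xs) 0) as [Hle|Hpos].
  { specialize (Hm s x Hs Hx). lra. }
  exfalso.
  destruct (Req_dec ts t1) as [Heq|Hne].
  { subst ts. specialize (Hterm xs Hxs). lra. }
  assert (Hts' : t0 <= ts < t1) by lra.
  destruct (Req_dec xs 0) as [H0|H0].
  { subst xs. specialize (Hb0 ts Hts' Hpos).
    destruct (pos_near_left (Wx ts) 0 L HL (UC_cseg _ _ _ _ _ ts 0 HUx ltac:(lra) ltac:(lra)) Hb0) as [e [He Hp]].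
    destruct (bd_left (W ts) (Wx ts) 0 L HL) as [y [Hy Hgt]].
    - intros z Hz. apply (UC_cseg t0 t1); auto; lra.
    - intros z Hz. apply Hdx; auto.
    - exists e; split; auto.
    - specialize (Hm ts y ltac:(lra) ltac:(lra)). lra. }
  destruct (Req_dec xs L) as [HL'|HL'].
  { subst xs. specialize (HbL ts Hts' Hpos).
    destruct (neg_near_right (Wx ts) 0 L HL (UC_cseg _ _ _ _ _ ts L HUx ltac:(lra) ltac:(lra)) HbL) as [e [He Hp]].
    destruct (bd_right (W ts) (Wx ts) 0 L HL) as [y [Hy Hgt]].
    - intros z Hz. apply (UC_cseg t0 t1); auto; lra.
    - intros z Hz. apply Hdx; auto.
    - exists e; split; auto.
    - specialize (Hm ts y ltac:(lra) ltac:(lra)). lra. }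
  assert (Hxs' : 0 < xs < L) by lra.
  destruct (interior_max (W ts) (Wx ts) (Wxx ts xs) 0 L xs Hxs') as [Hx0 Hxx].
  - intros y Hy. apply Hdx; auto.
  - apply Hdxx; auto.
  - intros y Hy. apply Hm; lra.
  - specialize (Hint ts xs Hts' Hxs' Hpos Hx0 Hxx).
    destruct (deriv_right (fun s => W s xs) ts (Wt ts xs) (Hdt ts xs Hts' Hxs') Hint (t1 - ts) ltac:(lra)) as [s' [Hs' Hgt]].
    specialize (Hm s' xs ltac:(lra) ltac:(lra)). simpl in Hgt. lra.
Qed.

Lemma UC_rev a b c d W : UC a b c d W -> UC (-b) (-a) c d (fun s x => W (-s) x).
Proof.
  intros HU eps He. destruct (HU eps He) as [dl [Hd H]]. exists dl; split; auto.
  intros t x s y Ht Hx Hs Hy Hts Hxy. apply H; try lra.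
  replace (- t - - s) with (- (t - s)) by ring. rewrite Rabs_Ropp; auto.
Qed.

Lemma is_derive_rev (f : R -> R) s d : is_derive f (- s) d -> is_derive (fun s => f (- s)) s (- d).
Proof.
  intros H. pose proof (is_derive_comp f Ropp s d (-1) H) as H2.
  assert (Hopp : is_derive Ropp s (-1)).
  { change (is_derive (fun x => - x) s (-1)). auto_derive; auto; ring. }
  specialize (H2 Hopp). eapply is_derive_ext in H2. 2: { intros t. reflexivity. }
  replace (- d) with (scal (-1) d). exact H2. unfold scal; simpl; unfold mult; simpl. ring.
Qed.

Lemma maxprin_fwd (L t1 : R) (W Wt Wx Wxx : R -> R -> R) :
  0 < t1 -> 0 < L ->
  UC 0 t1 0 L W -> UC 0 t1 0 L Wx ->
  (forall s x, 0 < s <= t1 -> 0 < x < L -> is_derive (fun s => W s x) s (Wt s x)) ->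
  (forall s x, 0 < s <= t1 -> 0 < x < L -> is_derive (W s) x (Wx s x)) ->
  (forall s x, 0 < s <= t1 -> 0 < x < L -> is_derive (Wx s) x (Wxx s x)) ->
  (forall x, 0 <= x <= L -> W 0 x <= 0) ->
  (forall s, 0 < s <= t1 -> 0 < W s 0 -> 0 < Wx s 0) ->
  (forall s, 0 < s <= t1 -> 0 < W s L -> Wx s L < 0) ->
  (forall s x, 0 < s <= t1 -> 0 < x < L -> 0 < W s x -> Wx s x = 0 -> Wxx s x <= 0 -> Wt s x < 0) ->
  forall s x, 0 <= s <= t1 -> 0 <= x <= L -> W s x <= 0.
Proof.
  intros Ht HL HU HUx Hdt Hdx Hdxx Hinit Hb0 HbL Hint s x Hs Hx.
  replace s with (- - s) by ring.
  apply (maxprin_back L (- t1) 0 (fun s x => W (-s) x) (fun s x => - Wt (-s) x) (fun s x => Wx (-s) x) (fun s x => Wxx (-s) x)); try lra.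
  - pose proof (UC_rev _ _ _ _ _ HU) as H'; rewrite Ropp_0 in H'; exact H'.
  - pose proof (UC_rev _ _ _ _ _ HUx) as H'; rewrite Ropp_0 in H'; exact H'.
  - intros s' x' Hs' Hx'. apply (is_derive_rev (fun s => W s x')). apply Hdt; auto; lra.
  - intros s' x' Hs' Hx'. apply Hdx; auto; lra.
  - intros s' x' Hs' Hx'. apply Hdxx; auto; lra.
  - intros x' Hx'. rewrite Ropp_0. auto.
  - intros s' Hs' H. apply Hb0; auto; lra.
  - intros s' Hs' H. apply HbL; auto; lra.
  - intros s' x' Hs' Hx' H1 H2 H3. specialize (Hint (-s') x' ltac:(lra) Hx' H1 H2 H3). lra.
Qed.

Lemma der_aff (f : R -> R) x d a b c : is_derive f x d -> is_derive (fun z => a * f z + b * z + c) x (a * d + b).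
Proof.
  intros H. auto_derive. exists d; auto.
  replace (Derive (fun x0 => f x0) x) with d by (symmetry; apply is_derive_unique; auto). ring.
Qed.

Lemma der_mul (f g : R -> R) x df dg : is_derive f x df -> is_derive g x dg -> is_derive (fun z => f z * g z) x (df * g x + f x * dg).
Proof.
  intros H1 H2. auto_derive. split; [exists df; auto| split; [exists dg; auto|auto]].
  replace (Derive (fun x0 => f x0) x) with df by (symmetry; apply is_derive_unique; auto).
  replace (Derive (fun x0 => g x0) x) with dg by (symmetry; apply is_derive_unique; auto). ring.
Qed.

Lemma der_add (f g : R -> R) x df dg : is_derive f x df -> is_derive g x dg -> is_derive (fun z => f z + g z) x (df + dg).
Proof.
  intros H1 H2. auto_derive. split; [exists df; auto| split; [exists dg; auto|auto]].
  replace (Derive (fun x0 => f x0) x) with df by (symmetry; apply is_derive_unique; auto).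
  replace (Derive (fun x0 => g x0) x) with dg by (symmetry; apply is_derive_unique; auto). ring.
Qed.

Lemma der_ext (f g : R -> R) x d d' : is_derive f x d -> (forall z, f z = g z) -> d = d' -> is_derive g x d'.
Proof. intros H He Hd. subst d'. eapply is_derive_ext; eauto. Qed.

Lemma Rmin_lip x y x' y' : Rabs (Rmin x y - Rmin x' y') <= Rmax (Rabs (x - x')) (Rabs (y - y')).
Proof.
  pose proof (Rmax_l (Rabs (x - x')) (Rabs (y - y'))). pose proof (Rmax_r (Rabs (x - x')) (Rabs (y - y'))).
  revert H H0. generalize (Rmax (Rabs (x - x')) (Rabs (y - y'))). intros m H1 H2.
  unfold Rmin in *. repeat destruct Rle_dec; unfold Rabs in *; repeat destruct Rcase_abs; lra.
Qed.

Lemma cseg_ext a b f g z : (forall w, f w = g w) -> cseg a b f z -> cseg a b g z.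
Proof. intros He H eps Heps. destruct (H eps Heps) as [d [Hd Hw]]. exists d; split; auto. intros. rewrite <- !He. auto. Qed.

Lemma cseg_aff a b f z al be ga : cseg a b f z -> cseg a b (fun w => al * f w + be * w + ga) z.
Proof.
  intros H eps He.
  destruct (H (eps / (2 * (Rabs al + 1)))) as [d [Hd Hw]].
  { apply Rdiv_lt_0_compat; [lra|]. pose proof (Rabs_pos al); lra. }
  exists (Rmin d (eps / (2 * (Rabs be + 1)))). split.
  { apply Rmin_glb_lt; auto. apply Rdiv_lt_0_compat; [lra|]. pose proof (Rabs_pos be); lra. }
  intros w Hw1 Hw2. pose proof (Rmin_l d (eps / (2 * (Rabs be + 1)))). pose proof (Rmin_r d (eps / (2 * (Rabs be + 1)))).
  specialize (Hw w Hw1 ltac:(lra)).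
  replace (al * f w + be * w + ga - (al * f z + be * z + ga)) with (al * (f w - f z) + be * (w - z)) by ring.
  eapply Rle_lt_trans. apply Rabs_triang. rewrite !Rabs_mult.
  pose proof (Rabs_pos al). pose proof (Rabs_pos be). pose proof (Rabs_pos (f w - f z)). pose proof (Rabs_pos (w - z)).
  assert (Rabs al * Rabs (f w - f z) <= eps / 2).
  { apply Rle_trans with ((Rabs al + 1) * (eps / (2 * (Rabs al + 1)))).
    apply Rmult_le_compat; lra. right; field; lra. }
  assert (Rabs be * Rabs (w - z) < eps / 2).
  { apply Rle_lt_trans with (Rabs be * (eps / (2 * (Rabs be + 1)))). apply Rmult_le_compat_l; lra.
    apply Rlt_le_trans with ((Rabs be + 1) * (eps / (2 * (Rabs be + 1)))).
    apply Rmult_lt_compat_r. apply Rdiv_lt_0_compat; lra. lra. right; field; lra. }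
  lra.
Qed.

Lemma Rabs4 a b c d : Rabs (a - b - c + d) <= Rabs a + Rabs b + Rabs c + Rabs d.
Proof. unfold Rabs; repeat destruct Rcase_abs; lra. Qed.

Lemma lipschitz_core (L T r sigma M e t0 : R) (u ut ux uxx : R -> R -> R) (H : R -> R -> R) :
  0 < t0 < T -> 0 < L -> 0 < r -> 0 < M -> (e = 1 \/ e = -1) ->
  UC 0 T 0 L u -> UC 0 T 0 L ux ->
  (forall t x, 0 < t < T -> 0 < x < L -> is_derive (fun s => u s x) t (ut t x) /\
      is_derive (u t) x (ux t x) /\ is_derive (ux t) x (uxx t x)) ->
  (forall t x, 0 < t < T -> 0 < x < L -> ut t x = - (sigma ^ 2 / 2) * uxx t x + r * u t x - H t (ux t x)) ->
  (forall t, 0 <= t <= T -> ux t 0 = 0 /\ ux t L = 0) ->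
  (forall x y, (0 <= y /\ y <= x /\ x <= L) -> e * (u T x - u T y) <= M * (x - y)) ->
  forall t x y, t0 <= t <= T -> (0 <= y /\ y <= x /\ x <= L) -> e * (u t x - u t y) <= M * (x - y).
Proof.
  intros Ht0 HL Hr HM He HU HUx Hder Heq Hbc Hterm.
  assert (Hae : Rabs e = 1) by (destruct He; subst; unfold Rabs; destruct Rcase_abs; lra).
  set (Phi := fun t x y => e * (u t x - u t y) - M * (x - y)).
  set (F := fun t x y => Phi t x (Rmin x y)).
  assert (HF : UC3 t0 T 0 L 0 L F).
  { intros eps Heps. destruct (HU (eps/4)) as [d1 [Hd1 H1]]; [lra|].
    exists (Rmin d1 (eps / (4 * M))). split. apply Rmin_glb_lt; auto. apply Rdiv_lt_0_compat; lra.
    intros t x y t' x' y' Ht Hx Hy Ht' Hx' Hy' Htt Hxx Hyy.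
    pose proof (Rmin_l d1 (eps / (4 * M))). pose proof (Rmin_r d1 (eps / (4 * M))).
    pose proof (Rmin_lip x y x' y').
    assert (Hm : Rabs (Rmin x y - Rmin x' y') < Rmin d1 (eps / (4 * M))).
    { eapply Rle_lt_trans; eauto. unfold Rmax; destruct Rle_dec; lra. }
    assert (0 <= Rmin x y <= L) by (unfold Rmin; destruct Rle_dec; lra).
    assert (0 <= Rmin x' y' <= L) by (unfold Rmin; destruct Rle_dec; lra).
    pose proof (H1 t x t' x' ltac:(lra) Hx ltac:(lra) Hx' ltac:(lra) ltac:(lra)).
    pose proof (H1 t (Rmin x y) t' (Rmin x' y') ltac:(lra) H4 ltac:(lra) H5 ltac:(lra) ltac:(lra)).
    assert (HMx : M * Rabs (x - x') < eps / 4).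
    { apply Rlt_le_trans with (M * (eps / (4 * M))). apply Rmult_lt_compat_l; lra. right; field; lra. }
    assert (HMm : M * Rabs (Rmin x y - Rmin x' y') < eps / 4).
    { apply Rlt_le_trans with (M * (eps / (4 * M))). apply Rmult_lt_compat_l; lra. right; field; lra. }
    unfold F, Phi.
    replace (e * (u t x - u t (Rmin x y)) - M * (x - Rmin x y) - (e * (u t' x' - u t' (Rmin x' y')) - M * (x' - Rmin x' y')))
      with (e * (u t x - u t' x') - e * (u t (Rmin x y) - u t' (Rmin x' y')) - M * (x - x') + M * (Rmin x y - Rmin x' y')) by ring.
    eapply Rle_lt_trans. apply Rabs4.
    rewrite !Rabs_mult, Hae, (Rabs_pos_eq M) by lra. lra. }
  destruct (evt3 F t0 T 0 L 0 L ltac:(lra) ltac:(lra) ltac:(lra) HF) as [ts [xs [ys0 [Hts [Hxs [Hys0 Hm0]]]]]].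
  set (ys := Rmin xs ys0).
  assert (Hys : 0 <= ys <= xs) by (unfold ys, Rmin; destruct Rle_dec; lra).
  assert (Hm : forall t' x' y', t0 <= t' <= T -> (0 <= y' /\ y' <= x' /\ x' <= L) -> Phi t' x' y' <= Phi ts xs ys).
  { intros t' x' y' Ht' Hxy'. pose proof (Hm0 t' x' y' Ht' ltac:(lra) ltac:(lra)). unfold F in H0.
    rewrite Rmin_right in H0 by lra. exact H0. }
  intros t x y Ht Hxy. cut (Phi t x y <= 0); [unfold Phi; lra|]. specialize (Hm t x y Ht Hxy) as Hmt.
  destruct (Rle_or_lt (Phi ts xs ys) 0) as [Hle|Hpos]; [lra|]. exfalso.
  assert (Hneq : ys < xs).
  { destruct (Req_dec ys xs) as [E|E]; [|lra]. rewrite E in Hpos. unfold Phi in Hpos. ring_simplify in Hpos. lra. }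
  destruct (Req_dec ts T) as [ET|ET].
  { rewrite ET in Hpos. specialize (Hterm xs ys ltac:(lra)). unfold Phi in Hpos. lra. }
  assert (Hts' : 0 < ts < T) by lra.
  assert (Dx : forall z, 0 < z < L -> is_derive (fun z => Phi ts z ys) z (e * ux ts z - M)).
  { intros z Hz. destruct (Hder ts z Hts' Hz) as [_ [D _]].
    apply (der_ext (fun z => e * u ts z + (- M) * z + (- e * u ts ys + M * ys)) _ z (e * ux ts z + - M)). apply der_aff; auto.
    intros; unfold Phi; ring. simpl; lra. }
  assert (Dy : forall z, 0 < z < L -> is_derive (fun z => Phi ts xs z) z (- e * ux ts z + M)).
  { intros z Hz. destruct (Hder ts z Hts' Hz) as [_ [D _]].
    apply (der_ext (fun z => (- e) * u ts z + M * z + (e * u ts xs - M * xs)) _ z (- e * ux ts z + M)). apply der_aff; auto.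
    intros; unfold Phi; ring. simpl; lra. }
  assert (Hys_lt : ys < L) by lra.
  assert (CPx : forall z, ys <= z <= L -> cseg ys L (fun z => Phi ts z ys) z).
  { intros z Hz. apply (cseg_ext _ _ (fun w => e * u ts w + (- M) * w + (- e * u ts ys + M * ys))).
    intros; unfold Phi; ring. apply cseg_aff. apply (cseg_sub 0 L); try lra. apply (UC_cseg 0 T); auto; lra. }
  assert (CPy : forall z, 0 <= z <= xs -> cseg 0 xs (fun z => Phi ts xs z) z).
  { intros z Hz. apply (cseg_ext _ _ (fun w => (- e) * u ts w + M * w + (e * u ts xs - M * xs))).
    intros; unfold Phi; ring. apply cseg_aff. apply (cseg_sub 0 L); try lra. apply (UC_cseg 0 T); auto; lra. }
  destruct (Req_dec xs L) as [EL|EL].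
  { destruct (neg_near_right (fun z => e * ux ts z - M) ys L Hys_lt) as [d [Hd Hneg]].
    - apply (cseg_ext _ _ (fun w => e * ux ts w + 0 * w + - M)). intros; ring. apply cseg_aff.
      apply (cseg_sub 0 L); try lra. apply (UC_cseg 0 T); auto; lra.
    - destruct (Hbc ts ltac:(lra)) as [_ H2]. rewrite H2. lra.
    - destruct (bd_right (fun z => Phi ts z ys) (fun z => e * ux ts z - M) ys L Hys_lt CPx) as [z [Hz Hgt]].
      + intros z Hz. apply Dx. lra.
      + exists d; split; auto.
      + specialize (Hm ts z ys ltac:(lra) ltac:(lra)). rewrite EL in Hm. simpl in Hgt. lra. }
  assert (Hxs_lt : 0 < xs < L) by lra.
  destruct (Req_dec ys 0) as [E0|E0].
  { destruct (pos_near_left (fun z => - e * ux ts z + M) 0 xs ltac:(lra)) as [d [Hd Hp]].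
    - apply (cseg_ext _ _ (fun w => (- e) * ux ts w + 0 * w + M)). intros; ring. apply cseg_aff.
      apply (cseg_sub 0 L); try lra. apply (UC_cseg 0 T); auto; lra.
    - destruct (Hbc ts ltac:(lra)) as [H1 _]. rewrite H1. lra.
    - destruct (bd_left (fun z => Phi ts xs z) (fun z => - e * ux ts z + M) 0 xs ltac:(lra)) as [z [Hz Hgt]].
      + intros z Hz. rewrite <- E0 at 1. apply (cseg_ext _ _ (fun w => (- e) * u ts w + M * w + (e * u ts xs - M * xs))).
        intros; unfold Phi; ring. apply cseg_aff. apply (cseg_sub 0 L); try lra. apply (UC_cseg 0 T); auto; lra.
      + intros z Hz. apply Dy. lra.
      + exists d; split; auto.
      + specialize (Hm ts xs z ltac:(lra) ltac:(lra)). rewrite E0 in Hm. simpl in Hgt. lra. }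
  assert (Hys_in : 0 < ys < xs) by lra.
  destruct (interior_max (fun z => Phi ts z ys) (fun z => e * ux ts z - M) (e * uxx ts xs) ys L xs ltac:(lra)) as [Ex Exx].
  { intros z Hz. apply Dx. lra. }
  { destruct (Hder ts xs Hts' Hxs_lt) as [_ [_ D]].
    apply (der_ext (fun w => e * ux ts w + 0 * w + - M) _ xs (e * uxx ts xs + 0)). apply der_aff; auto.
    intros; ring. simpl; lra. }
  { intros z Hz. apply Hm; lra. }
  destruct (interior_max (fun z => Phi ts xs z) (fun z => - e * ux ts z + M) (- e * uxx ts ys) 0 xs ys Hys_in) as [Ey Eyy].
  { intros z Hz. apply Dy. lra. }
  { destruct (Hder ts ys ltac:(lra) ltac:(lra)) as [_ [_ D]].
    apply (der_ext (fun w => (- e) * ux ts w + 0 * w + M) _ ys (- e * uxx ts ys + 0)). apply der_aff; auto.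
    intros; ring. simpl; lra. }
  { intros z Hz. apply Hm; lra. }
  assert (Hux : ux ts xs = ux ts ys).
  { assert (e * ux ts xs = e * ux ts ys) by lra. destruct He; subst e; lra. }
  assert (Dt : is_derive (fun s => Phi s xs ys) ts (e * ut ts xs + - e * ut ts ys)).
  { destruct (Hder ts xs Hts' Hxs_lt) as [D1 _]. destruct (Hder ts ys Hts' ltac:(lra)) as [D2 _].
    apply (der_ext (fun s => (e * u s xs + 0 * s + 0) + ((- e) * u s ys + 0 * s + - M * (xs - ys))) _ ts ((e * ut ts xs + 0) + (- e * ut ts ys + 0))).
    apply der_add; apply der_aff; auto. intros; unfold Phi; ring. simpl; lra. }
  assert (Hpos_t : 0 < e * ut ts xs + - e * ut ts ys).
  { rewrite (Heq ts xs Hts' Hxs_lt), (Heq ts ys Hts' ltac:(lra)), Hux.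
    assert (HA : 0 <= - (sigma ^ 2 / 2) * (e * uxx ts xs - e * uxx ts ys)).
    { replace (- (sigma ^ 2 / 2) * (e * uxx ts xs - e * uxx ts ys)) with ((sigma ^ 2 / 2) * (- (e * uxx ts xs - e * uxx ts ys))) by ring.
      apply Rmult_le_pos. assert (0 <= sigma ^ 2) by (apply pow2_ge_0). lra. lra. }
    assert (HB : 0 < r * (e * (u ts xs - u ts ys))).
    { apply Rmult_lt_0_compat; auto. unfold Phi in Hpos.
      assert (0 < M * (xs - ys)) by (apply Rmult_lt_0_compat; lra). lra. }
    replace (e * (- (sigma ^ 2 / 2) * uxx ts xs + r * u ts xs - H ts (ux ts ys)) + - e * (- (sigma ^ 2 / 2) * uxx ts ys + r * u ts ys - H ts (ux ts ys)))
      with (- (sigma ^ 2 / 2) * (e * uxx ts xs - e * uxx ts ys) + r * (e * (u ts xs - u ts ys))) by ring.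
    lra. }
  destruct (deriv_right (fun s => Phi s xs ys) ts _ Dt Hpos_t (T - ts) ltac:(lra)) as [s' [Hs' Hgt]].
  specialize (Hm s' xs ys ltac:(lra) ltac:(lra)). simpl in Hgt. lra.
Qed.

Lemma UC_cont2d a b c d f : (forall t x, a <= t <= b -> c <= x <= d -> continuity_2d_pt f t x) -> UC a b c d f.
Proof.
  intros Hc eps He. destruct (uniform_continuity_2d f a b c d Hc (mkposreal eps He)) as [[dl Hd] H].
  exists dl; split; [exact Hd|]. intros t x s y Ht Hx Hs Hy Hts Hxy.
  rewrite Rabs_minus_sym. rewrite Rabs_minus_sym in Hts, Hxy. exact (H t x s y Ht Hx Hs Hy Hts Hxy).
Qed.

Lemma UC_fx a b c d (g : R -> R) : (forall x, ex_derive g x) -> UC a b c d (fun t x => g x).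
Proof.
  intros Hg. apply UC_cont2d. intros t x _ _.
  apply (continuity_1d_2d_pt_comp g (fun u v => v)). apply continuity_pt_filterlim. apply (@ex_derive_continuous R_AbsRing R_NormedModule). apply Hg.
  apply continuity_2d_pt_id2.
Qed.

Lemma UC_ft a b c d (g : R -> R) : (forall x, ex_derive g x) -> UC a b c d (fun t x => g t).
Proof.
  intros Hg. apply UC_cont2d. intros t x _ _.
  apply (continuity_1d_2d_pt_comp g (fun u v => u)). apply continuity_pt_filterlim. apply (@ex_derive_continuous R_AbsRing R_NormedModule). apply Hg.
  apply continuity_2d_pt_id1.
Qed.

Lemma UC_ext a b c d f g : (forall t x, f t x = g t x) -> UC a b c d f -> UC a b c d g.
Proof. intros He H eps Heps. destruct (H eps Heps) as [dl [Hd Hw]]. exists dl; split; auto. intros. rewrite <- !He. auto. Qed.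

Lemma UC_bound a b c d f : a <= b -> c <= d -> UC a b c d f -> exists B, 0 <= B /\ forall t x, a <= t <= b -> c <= x <= d -> Rabs (f t x) <= B.
Proof.
  intros Hab Hcd HU.
  destruct (evt2 (fun t x => Rabs (f t x)) a b c d Hab Hcd) as [t [x [Ht [Hx Hm]]]].
  { intros eps He. destruct (HU eps He) as [dl [Hd H]]. exists dl; split; auto. intros.
    eapply Rle_lt_trans. apply Rabs_triang_inv2. apply H; auto. }
  exists (Rabs (f t x)). split. apply Rabs_pos. auto.
Qed.

Lemma UC_mult a b c d f g : a <= b -> c <= d -> UC a b c d f -> UC a b c d g -> UC a b c d (fun t x => f t x * g t x).
Proof.
  intros Hab Hcd Hf Hg.
  destruct (UC_bound a b c d f Hab Hcd Hf) as [Bf [HBf Hbf]].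
  destruct (UC_bound a b c d g Hab Hcd Hg) as [Bg [HBg Hbg]].
  intros eps He.
  destruct (Hf (eps / (2 * (Bg + 1)))) as [d1 [Hd1 H1]]. apply Rdiv_lt_0_compat; lra.
  destruct (Hg (eps / (2 * (Bf + 1)))) as [d2 [Hd2 H2]]. apply Rdiv_lt_0_compat; lra.
  exists (Rmin d1 d2). split. apply Rmin_glb_lt; auto.
  intros t x s y Ht Hx Hs Hy Hts Hxy. pose proof (Rmin_l d1 d2). pose proof (Rmin_r d1 d2).
  specialize (H1 t x s y Ht Hx Hs Hy ltac:(lra) ltac:(lra)). specialize (H2 t x s y Ht Hx Hs Hy ltac:(lra) ltac:(lra)).
  replace (f t x * g t x - f s y * g s y) with ((f t x - f s y) * g t x + f s y * (g t x - g s y)) by ring.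
  eapply Rle_lt_trans. apply Rabs_triang. rewrite !Rabs_mult.
  specialize (Hbg t x Ht Hx). specialize (Hbf s y Hs Hy).
  pose proof (Rabs_pos (f t x - f s y)). pose proof (Rabs_pos (g t x - g s y)).
  assert (Rabs (f t x - f s y) * Rabs (g t x) <= eps / 2).
  { apply Rle_trans with ((eps / (2 * (Bg + 1))) * (Bg + 1)). apply Rmult_le_compat; try lra. apply Rabs_pos.
    right; field; lra. }
  assert (Rabs (f s y) * Rabs (g t x - g s y) < eps / 2).
  { apply Rle_lt_trans with ((Bf + 1) * Rabs (g t x - g s y)). apply Rmult_le_compat_r; lra.
    apply Rlt_le_trans with ((Bf + 1) * (eps / (2 * (Bf + 1)))). apply Rmult_lt_compat_l; lra. right; field; lra. }
  lra.
Qed.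

Lemma cseg_plus a b f g z : cseg a b f z -> cseg a b g z -> cseg a b (fun w => f w + g w) z.
Proof.
  intros Hf Hg eps He. destruct (Hf (eps/2)) as [d1 [Hd1 H1]]; [lra|]. destruct (Hg (eps/2)) as [d2 [Hd2 H2]]; [lra|].
  exists (Rmin d1 d2); split. apply Rmin_glb_lt; auto. intros w Hw Hwz.
  pose proof (Rmin_l d1 d2). pose proof (Rmin_r d1 d2).
  specialize (H1 w Hw ltac:(lra)). specialize (H2 w Hw ltac:(lra)).
  replace (f w + g w - (f z + g z)) with ((f w - f z) + (g w - g z)) by ring.
  eapply Rle_lt_trans. apply Rabs_triang. lra.
Qed.

Lemma closure_abs (f : R -> R) a b p K : a < b -> a <= p <= b -> cseg a b f p ->
  (forall z, a < z < b -> Rabs (f z) <= K) -> Rabs (f p) <= K.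
Proof.
  intros Hab Hp Hc Hz.
  assert (f p <= K) by (apply (closure_le f a b); auto; intros z Hz'; specialize (Hz z Hz'); unfold Rabs in Hz; destruct Rcase_abs in Hz; lra).
  assert (- f p <= K).
  { apply (closure_le (fun z => - f z) a b); auto.
    apply (cseg_ext _ _ (fun w => (-1) * f w + 0 * w + 0)). intros; ring. apply cseg_aff; auto.
    intros z Hz'; specialize (Hz z Hz'); unfold Rabs in Hz; destruct Rcase_abs in Hz; lra. }
  unfold Rabs; destruct Rcase_abs; lra.
Qed.

Lemma closure2_abs a b c d f K : a < b -> c < d -> UC a b c d f ->
  (forall t x, a < t < b -> c < x < d -> Rabs (f t x) <= K) ->
  forall t x, a <= t <= b -> c <= x <= d -> Rabs (f t x) <= K.
Proof.
  intros Hab Hcd HU H.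
  assert (H1 : forall t x, a < t < b -> c <= x <= d -> Rabs (f t x) <= K).
  { intros t x Ht Hx. apply (closure_abs (f t) c d); [lra|lra| |].
    apply (UC_cseg a b); auto; lra. intros; apply H; auto. }
  intros t x Ht Hx. apply (closure_abs (fun s => f s x) a b); [lra|lra| |].
  apply (UC_cseg_t a b c d); auto.
  intros; apply H1; auto.
Qed.

Lemma deriv_bound (f : R -> R) x d M : is_derive f x d ->
  (exists dl, 0 < dl /\ forall h, h <> 0 -> Rabs h < dl -> Rabs (f (x + h) - f x) <= M * Rabs h) -> Rabs d <= M.
Proof.
  intros Hd [dl [Hdl Hb]]. apply is_derive_Reals in Hd.
  destruct (Rle_or_lt (Rabs d) M) as [H|H]; auto. exfalso.
  destruct (Hd (Rabs d - M) ltac:(lra)) as [[de Hde] Hq]. simpl in Hq.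
  set (h := Rmin (dl/2) (de/2)). assert (0 < h) by (apply Rmin_glb_lt; lra).
  pose proof (Rmin_l (dl/2) (de/2)). pose proof (Rmin_r (dl/2) (de/2)). fold h in H1, H2.
  assert (Hh : h <> 0) by lra. rewrite <- (Rabs_pos_eq h) in H1, H2 by lra.
  specialize (Hq h Hh ltac:(lra)). specialize (Hb h Hh ltac:(lra)).
  assert (Rabs ((f (x + h) - f x) / h) <= M).
  { unfold Rdiv. rewrite Rabs_mult, Rabs_inv by auto.
    apply Rmult_le_reg_r with (Rabs h). apply Rabs_pos_lt; auto.
    rewrite Rmult_assoc, Rinv_l. lra. apply Rabs_no_R0; auto. }
  pose proof (Rabs_triang_inv d ((f (x + h) - f x) / h)).
  rewrite Rabs_minus_sym in Hq. lra.
Qed.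

Lemma der_quad k x0 c x : is_derive (fun x => k * (x - x0) ^ 2 + c) x (2 * k * (x - x0)).
Proof. auto_derive; auto. ring. Qed.

Lemma der_lin k c x : is_derive (fun x => k * x + c) x k.
Proof. auto_derive; auto. ring. Qed.

Lemma UC_sep a b c d (g h : R -> R) : (forall x, ex_derive g x) -> (forall x, ex_derive h x) ->
  UC a b c d (fun t x => g t + h x).
Proof. intros Hg Hh. apply UC_plus; [apply UC_ft|apply UC_fx]; auto. Qed.

Definition usol (L T r sigma : R) (u ut ux uxx : R -> R -> R) (H : R -> R -> R) : Prop :=
  UC 0 T 0 L u /\ UC 0 T 0 L ux /\
  (forall t x, 0 < t < T -> 0 < x < L -> is_derive (fun s => u s x) t (ut t x) /\
      is_derive (u t) x (ux t x) /\ is_derive (ux t) x (uxx t x)) /\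
  (forall t x, 0 < t < T -> 0 < x < L -> ut t x = - (sigma ^ 2 / 2) * uxx t x + r * u t x - H t (ux t x)) /\
  (forall t, 0 <= t <= T -> ux t 0 = 0 /\ ux t L = 0).

Lemma upper_cmp L T r sigma u ut ux uxx H t0 s x0 c0 A B :
  usol L T r sigma u ut ux uxx H -> 0 < t0 < s -> s <= T -> 0 < x0 < L -> 0 < A ->
  (forall x, 0 <= x <= L -> u s x <= c0 + A * (x - x0) ^ 2) ->
  (forall tau x, t0 <= tau < s -> 0 < x < L -> uxx tau x <= 2 * A ->
     c0 + A * (x - x0) ^ 2 + B * (s - tau) < u tau x -> 0 < ut tau x + B) ->
  forall tau x, t0 <= tau <= s -> 0 <= x <= L -> u tau x <= c0 + A * (x - x0) ^ 2 + B * (s - tau).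
Proof.
  intros [HU [HUx [Hder [Heq Hbc]]]] Ht0 Hs Hx0 HA Hterm Hstr tau x Htau Hx.
  assert (HL : 0 < L) by lra.
  cut (u tau x - (c0 + A * (x - x0) ^ 2 + B * (s - tau)) <= 0). lra.
  apply (maxprin_back L t0 s (fun tau x => u tau x - (c0 + A * (x - x0) ^ 2 + B * (s - tau)))
     (fun tau x => ut tau x + B) (fun tau x => ux tau x - 2 * A * (x - x0)) (fun tau x => uxx tau x - 2 * A)); auto; try lra.
  - apply (UC_ext _ _ _ _ (fun tau x => u tau x + ((fun t => - (c0 + B * (s - t))) tau + (fun x => - (A * (x - x0) ^ 2)) x))).
    intros; simpl; ring. apply UC_plus. apply (UC_sub 0 T 0 L); auto; lra.
    apply UC_sep; intros; auto_derive; auto.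
  - apply (UC_ext _ _ _ _ (fun tau x => ux tau x + ((fun t => 0) tau + (fun x => - (2 * A * (x - x0))) x))).
    intros; simpl; ring. apply UC_plus. apply (UC_sub 0 T 0 L); auto; lra.
    apply UC_sep; intros; auto_derive; auto.
  - intros s' x' Hs' Hx'. destruct (Hder s' x' ltac:(lra) Hx') as [D _].
    apply (der_ext (fun z => 1 * u z x' + B * z + (- (c0 + A * (x' - x0) ^ 2 + B * s))) _ s' (1 * ut s' x' + B)).
    apply der_aff; auto. intros; ring. simpl; lra.
  - intros s' x' Hs' Hx'. destruct (Hder s' x' ltac:(lra) Hx') as [_ [D _]].
    apply (der_ext (fun z => u s' z + ((- A) * (z - x0) ^ 2 + (- (c0 + B * (s - s'))))) _ x' (ux s' x' + 2 * (- A) * (x' - x0))).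
    apply der_add; auto. apply der_quad. intros; ring. simpl; lra.
  - intros s' x' Hs' Hx'. destruct (Hder s' x' ltac:(lra) Hx') as [_ [_ D]].
    apply (der_ext (fun z => 1 * ux s' z + (- 2 * A) * z + 2 * A * x0) _ x' (1 * uxx s' x' + - 2 * A)).
    apply der_aff; auto. intros; ring. simpl; lra.
  - intros x' Hx'. specialize (Hterm x' Hx'). lra.
  - intros s' Hs' _. destruct (Hbc s' ltac:(lra)) as [H0 _]. rewrite H0.
    assert (0 < A * x0) by (apply Rmult_lt_0_compat; lra). lra.
  - intros s' Hs' _. destruct (Hbc s' ltac:(lra)) as [_ H0]. rewrite H0.
    assert (0 < A * (L - x0)) by (apply Rmult_lt_0_compat; lra). lra.
  - intros s' x' Hs' Hx' Hpos Hwx Hwxx. apply Hstr; auto; lra.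
Qed.

Lemma lower_cmp L T r sigma u ut ux uxx H t0 s x0 c0 A B :
  usol L T r sigma u ut ux uxx H -> 0 < t0 < s -> s <= T -> 0 < x0 < L -> 0 < A ->
  (forall x, 0 <= x <= L -> c0 - A * (x - x0) ^ 2 <= u s x) ->
  (forall tau x, t0 <= tau < s -> 0 < x < L -> - (2 * A) <= uxx tau x ->
     u tau x < c0 - A * (x - x0) ^ 2 - B * (s - tau) -> 0 < B - ut tau x) ->
  forall tau x, t0 <= tau <= s -> 0 <= x <= L -> c0 - A * (x - x0) ^ 2 - B * (s - tau) <= u tau x.
Proof.
  intros [HU [HUx [Hder [Heq Hbc]]]] Ht0 Hs Hx0 HA Hterm Hstr tau x Htau Hx.
  assert (HL : 0 < L) by lra.
  cut ((c0 - A * (x - x0) ^ 2 - B * (s - tau)) - u tau x <= 0). lra.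
  apply (maxprin_back L t0 s (fun tau x => (c0 - A * (x - x0) ^ 2 - B * (s - tau)) - u tau x)
     (fun tau x => B - ut tau x) (fun tau x => - (2 * A * (x - x0)) - ux tau x) (fun tau x => - (2 * A) - uxx tau x)); auto; try lra.
  - apply (UC_ext _ _ _ _ (fun tau x => - u tau x + ((fun t => c0 - B * (s - t)) tau + (fun x => - (A * (x - x0) ^ 2)) x))).
    intros; simpl; ring. apply UC_plus. apply UC_opp. apply (UC_sub 0 T 0 L); auto; lra.
    apply UC_sep; intros; auto_derive; auto.
  - apply (UC_ext _ _ _ _ (fun tau x => - ux tau x + ((fun t => 0) tau + (fun x => - (2 * A * (x - x0))) x))).
    intros; simpl; ring. apply UC_plus. apply UC_opp. apply (UC_sub 0 T 0 L); auto; lra.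
    apply UC_sep; intros; auto_derive; auto.
  - intros s' x' Hs' Hx'. destruct (Hder s' x' ltac:(lra) Hx') as [D _].
    apply (der_ext (fun z => (-1) * u z x' + B * z + (c0 - A * (x' - x0) ^ 2 - B * s)) _ s' ((-1) * ut s' x' + B)).
    apply der_aff; auto. intros; ring. simpl; lra.
  - intros s' x' Hs' Hx'. destruct (Hder s' x' ltac:(lra) Hx') as [_ [D _]].
    apply (der_ext (fun z => ((- A) * (z - x0) ^ 2 + (c0 - B * (s - s'))) + ((-1) * u s' z + 0 * z + 0)) _ x' (2 * (- A) * (x' - x0) + ((-1) * ux s' x' + 0))).
    apply der_add; [apply der_quad| apply der_aff; auto]. intros; ring. simpl; lra.
  - intros s' x' Hs' Hx'. destruct (Hder s' x' ltac:(lra) Hx') as [_ [_ D]].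
    apply (der_ext (fun z => (-1) * ux s' z + (- 2 * A) * z + 2 * A * x0) _ x' ((-1) * uxx s' x' + - 2 * A)).
    apply der_aff; auto. intros; ring. simpl; lra.
  - intros x' Hx'. specialize (Hterm x' Hx'). lra.
  - intros s' Hs' _. destruct (Hbc s' ltac:(lra)) as [H0 _]. rewrite H0.
    assert (0 < A * x0) by (apply Rmult_lt_0_compat; lra). lra.
  - intros s' Hs' _. destruct (Hbc s' ltac:(lra)) as [_ H0]. rewrite H0.
    assert (0 < A * (L - x0)) by (apply Rmult_lt_0_compat; lra). lra.
  - intros s' x' Hs' Hx' Hpos Hwx Hwxx. apply Hstr; auto; lra.
Qed.

Lemma sq_bound M e z : 0 < e -> M * Rabs z <= e + M ^ 2 / (4 * e) * z ^ 2.
Proof.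
  intros He.
  assert (0 <= (M * Rabs z - 2 * e) ^ 2 / (4 * e)) by (apply Rdiv_le_0_compat; [apply pow2_ge_0|lra]).
  assert (Hz : z ^ 2 = Rabs z ^ 2) by (unfold Rabs; destruct Rcase_abs; ring).
  rewrite Hz. replace ((M * Rabs z - 2 * e) ^ 2 / (4 * e)) with (e + M ^ 2 / (4 * e) * Rabs z ^ 2 - M * Rabs z) in H by (field; lra).
  lra.
Qed.

Lemma time_holder_int L T r sigma u ut ux uxx H M U Hm t s x0 :
  usol L T r sigma u ut ux uxx H -> 0 < r -> 0 < sigma <= 1 -> 0 < M -> 0 <= Hm ->
  (forall t x y, 0 <= t <= T -> 0 <= x <= L -> 0 <= y <= L -> Rabs (u t x - u t y) <= M * Rabs (x - y)) ->
  (forall t x, 0 <= t <= T -> 0 <= x <= L -> Rabs (u t x) <= U) ->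
  (forall t x, 0 < t < T -> 0 < x < L -> 0 <= H t (ux t x) <= Hm) ->
  0 < t < s -> s <= T -> 0 < x0 < L ->
  Rabs (u t x0 - u s x0) <= (1 + M ^ 2 / 4 + (r * U + Hm + 1) * sqrt T) * sqrt (s - t).
Proof.
  intros Hsol Hr Hsig HM HHm Hlip Hbd HH Hts HsT Hx0.
  pose proof Hsol as [HU [HUx [Hder [Heq Hbc]]]].
  set (d := s - t). set (ep := sqrt d).
  assert (Hd : 0 < d) by (unfold d; lra).
  assert (Hep : 0 < ep) by (apply sqrt_lt_R0; auto).
  assert (Hepd : ep * ep = d) by (apply sqrt_sqrt; lra).
  set (A := M ^ 2 / (4 * ep)).
  assert (HA : 0 < A) by (unfold A; apply Rdiv_lt_0_compat; [apply pow_lt|]; lra).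
  set (B := A + r * U + Hm + 1).
  assert (HU0 : 0 <= U) by (specialize (Hbd t x0 ltac:(lra) ltac:(lra)); pose proof (Rabs_pos (u t x0)); lra).
  assert (Hsig2 : 0 < sigma ^ 2 <= 1) by (split; [apply pow_lt; lra| simpl; nra]).
  assert (Hup : u t x0 <= (u s x0 + ep) + A * (x0 - x0) ^ 2 + B * (s - t)).
  { apply (upper_cmp L T r sigma u ut ux uxx H t s x0 (u s x0 + ep) A B Hsol); auto; try lra.
    - intros x Hx. specialize (Hlip s x x0 ltac:(lra) Hx ltac:(lra)).
      pose proof (sq_bound M ep (x - x0) Hep). fold A in H0.
      pose proof (Rle_abs (u s x - u s x0)). pose proof (Rle_abs (- (u s x - u s x0))). rewrite Rabs_Ropp in H2. lra.
    - intros tau x Htau Hx Huxx _. rewrite (Heq tau x ltac:(lra) Hx).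
      assert (sigma ^ 2 / 2 * uxx tau x <= sigma ^ 2 / 2 * (2 * A)) by (apply Rmult_le_compat_l; lra).
      assert (sigma ^ 2 * A <= 1 * A) by (apply Rmult_le_compat_r; lra).
      specialize (Hbd tau x ltac:(lra) ltac:(lra)).
      assert (- U <= u tau x) by (unfold Rabs in Hbd; destruct Rcase_abs in Hbd; lra).
      assert (r * (- U) <= r * u tau x) by (apply Rmult_le_compat_l; lra).
      specialize (HH tau x ltac:(lra) Hx). unfold B. nra. }
  assert (Hlo : (u s x0 - ep) - A * (x0 - x0) ^ 2 - B * (s - t) <= u t x0).
  { apply (lower_cmp L T r sigma u ut ux uxx H t s x0 (u s x0 - ep) A B Hsol); auto; try lra.
    - intros x Hx. specialize (Hlip s x x0 ltac:(lra) Hx ltac:(lra)).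
      pose proof (sq_bound M ep (x - x0) Hep). fold A in H0.
      pose proof (Rle_abs (u s x - u s x0)). pose proof (Rle_abs (- (u s x - u s x0))). rewrite Rabs_Ropp in H2. lra.
    - intros tau x Htau Hx Huxx _. rewrite (Heq tau x ltac:(lra) Hx).
      assert (sigma ^ 2 / 2 * (- (2 * A)) <= sigma ^ 2 / 2 * uxx tau x) by (apply Rmult_le_compat_l; lra).
      assert (sigma ^ 2 * A <= 1 * A) by (apply Rmult_le_compat_r; lra).
      specialize (Hbd tau x ltac:(lra) ltac:(lra)).
      assert (u tau x <= U) by (unfold Rabs in Hbd; destruct Rcase_abs in Hbd; lra).
      assert (r * u tau x <= r * U) by (apply Rmult_le_compat_l; lra).
      specialize (HH tau x ltac:(lra) Hx). unfold B. nra. }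
  replace (x0 - x0) with 0 in Hup, Hlo by ring.
  assert (HBd : ep + B * (s - t) <= (1 + M ^ 2 / 4 + (r * U + Hm + 1) * sqrt T) * ep).
  { fold d. unfold B, A.
    replace ((M ^ 2 / (4 * ep) + r * U + Hm + 1) * d) with (M ^ 2 / 4 * ep + (r * U + Hm + 1) * (ep * ep)) by (rewrite <- Hepd; field; lra).
    assert (ep <= sqrt T) by (unfold ep, d; apply sqrt_le_1; lra).
    assert (0 <= r * U + Hm + 1) by (assert (0 <= r * U) by (apply Rmult_le_pos; lra); lra).
    assert ((r * U + Hm + 1) * (ep * ep) <= (r * U + Hm + 1) * (sqrt T * ep)).
    { apply Rmult_le_compat_l; auto. apply Rmult_le_compat_r; lra. }
    nra. }
  fold ep. unfold Rabs; destruct Rcase_abs; lra.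
Qed.

Lemma cseg_diff a b f g z : cseg a b f z -> cseg a b g z -> cseg a b (fun w => f w - g w) z.
Proof.
  intros Hf Hg. apply (cseg_ext _ _ (fun w => f w + ((-1) * g w + 0 * w + 0))). intros; ring.
  apply cseg_plus; auto. apply cseg_aff; auto.
Qed.

Lemma time_holder L T r sigma u ut ux uxx H M U Hm :
  usol L T r sigma u ut ux uxx H -> 0 < L -> 0 < T -> 0 < r -> 0 < sigma <= 1 -> 0 < M -> 0 <= Hm ->
  (forall t x y, 0 <= t <= T -> 0 <= x <= L -> 0 <= y <= L -> Rabs (u t x - u t y) <= M * Rabs (x - y)) ->
  (forall t x, 0 <= t <= T -> 0 <= x <= L -> Rabs (u t x) <= U) ->
  (forall t x, 0 < t < T -> 0 < x < L -> 0 <= H t (ux t x) <= Hm) ->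
  forall t s x, 0 <= t <= T -> 0 <= s <= T -> 0 <= x <= L ->
  Rabs (u t x - u s x) <= (1 + M ^ 2 / 4 + (r * U + Hm + 1) * sqrt T) * sqrt (Rabs (t - s)).
Proof.
  intros Hsol HL HT Hr Hsig HM HHm Hlip Hbd HH.
  pose proof Hsol as [HU [HUx _]].
  set (C := 1 + M ^ 2 / 4 + (r * U + Hm + 1) * sqrt T).
  assert (HU0 : 0 <= U) by (specialize (Hbd 0 0 ltac:(lra) ltac:(lra)); pose proof (Rabs_pos (u 0 0)); lra).
  assert (HC : 0 <= C).
  { unfold C. assert (0 <= r * U) by (apply Rmult_le_pos; lra). pose proof (sqrt_pos T).
    assert (0 <= (r * U + Hm + 1) * sqrt T) by (apply Rmult_le_pos; lra). pose proof (pow2_ge_0 M). lra. }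
  assert (Main : forall t s x, 0 <= t < s -> s <= T -> 0 <= x <= L -> Rabs (u t x - u s x) <= C * sqrt (s - t)).
  { intros t s x Hts HsT Hx.
    assert (Hpos : forall t', 0 < t' < s -> Rabs (u t' x - u s x) <= C * sqrt (s - t')).
    { intros t' Ht'. apply (closure_abs (fun z => u t' z - u s z) 0 L); auto; try lra.
      - apply cseg_diff; apply (UC_cseg 0 T 0 L); auto; lra.
      - intros z Hz. apply (time_holder_int L T r sigma u ut ux uxx H M U Hm t' s z); auto; lra. }
    destruct (Req_dec t 0) as [E|E].
    - subst t. apply (closure_abs (fun tau => u tau x - u s x) 0 s); try lra.
      + apply (cseg_ext _ _ (fun w => 1 * u w x + 0 * w + (- u s x))). intros; ring. apply cseg_aff.
        apply (cseg_sub 0 T); try lra. apply (UC_cseg_t 0 T 0 L); auto; lra.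
      + intros z Hz. eapply Rle_trans. apply Hpos; lra. apply Rmult_le_compat_l; auto. apply sqrt_le_1; lra.
    - apply Hpos. lra. }
  intros t s x Ht Hs Hx.
  destruct (Rtotal_order t s) as [Hl|[He|Hg]].
  - replace (Rabs (t - s)) with (s - t) by (rewrite Rabs_minus_sym; rewrite Rabs_pos_eq; lra). apply Main; lra.
  - subst. rewrite !Rminus_eq_0, Rabs_R0, sqrt_0, Rmult_0_r. right; reflexivity.
  - replace (Rabs (t - s)) with (t - s) by (rewrite Rabs_pos_eq; lra). rewrite Rabs_minus_sym. apply Main; lra.
Qed.

Lemma u_bounds L T r sigma u ut ux uxx H KU Hm :
  usol L T r sigma u ut ux uxx H -> 0 < L -> 0 < T -> 0 < r -> 0 < sigma <= 1 -> 0 <= KU -> 0 <= Hm ->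
  (forall x, 0 <= x <= L -> 0 <= u T x <= KU) ->
  (forall t x, 0 < t < T -> 0 < x < L -> 0 <= H t (ux t x) <= Hm) ->
  forall t x, 0 <= t <= T -> 0 <= x <= L -> Rabs (u t x) <= KU + L ^ 2 + (2 + Hm) * T.
Proof.
  intros Hsol HL HT Hr Hsig HKU HHm Hterm HH.
  pose proof Hsol as [HU [HUx [Hder [Heq Hbc]]]].
  assert (Hsig2 : 0 < sigma ^ 2 <= 1) by (split; [apply pow_lt; lra| simpl; nra]).
  assert (Hq : forall x, 0 <= x <= L -> 0 <= (x - L / 2) ^ 2 <= L ^ 2) by (intros; split; [apply pow2_ge_0|nra]).
  assert (Hint : forall t x, 0 < t <= T -> 0 <= x <= L -> Rabs (u t x) <= KU + L ^ 2 + (2 + Hm) * T).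
  { intros t x Ht Hx.
    assert (Hup : u t x <= KU + 1 * (x - L / 2) ^ 2 + (2 + Hm) * (T - t)).
    { apply (upper_cmp L T r sigma u ut ux uxx H (t / 2) T (L / 2) KU 1 (2 + Hm) Hsol); auto; try lra.
      - intros x' Hx'. specialize (Hterm x' Hx'). specialize (Hq x' Hx'). lra.
      - intros tau x' Htau Hx' Huxx Hgt. rewrite (Heq tau x' ltac:(lra) Hx').
        specialize (Hq x' ltac:(lra)).
        assert (sigma ^ 2 / 2 * uxx tau x' <= sigma ^ 2 / 2 * (2 * 1)) by (apply Rmult_le_compat_l; lra).
        assert (0 < r * u tau x').
        { apply Rmult_lt_0_compat; auto. assert (0 <= (2 + Hm) * (T - tau)) by (apply Rmult_le_pos; lra). lra. }
        specialize (HH tau x' ltac:(lra) Hx'). lra. }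
    assert (Hlo : 0 - 1 * (x - L / 2) ^ 2 - 2 * (T - t) <= u t x).
    { apply (lower_cmp L T r sigma u ut ux uxx H (t / 2) T (L / 2) 0 1 2 Hsol); auto; try lra.
      - intros x' Hx'. specialize (Hterm x' Hx'). specialize (Hq x' Hx'). lra.
      - intros tau x' Htau Hx' Huxx Hlt. rewrite (Heq tau x' ltac:(lra) Hx').
        specialize (Hq x' ltac:(lra)).
        assert (sigma ^ 2 / 2 * (- (2 * 1)) <= sigma ^ 2 / 2 * uxx tau x') by (apply Rmult_le_compat_l; lra).
        assert (r * u tau x' < 0).
        { assert (u tau x' < 0) by lra. assert (0 < r * - u tau x') by (apply Rmult_lt_0_compat; lra). lra. }
        specialize (HH tau x' ltac:(lra) Hx'). lra. }
    specialize (Hq x Hx).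
    assert ((2 + Hm) * (T - t) <= (2 + Hm) * T) by (apply Rmult_le_compat_l; lra).
    assert (0 <= Hm * T) by (apply Rmult_le_pos; lra).
    unfold Rabs; destruct Rcase_abs; lra. }
  intros t x Ht Hx. destruct (Req_dec t 0) as [E|E].
  - subst t. apply (closure_abs (fun s => u s x) 0 T); try lra.
    apply (UC_cseg_t 0 T 0 L); auto; lra. intros z Hz. apply Hint; lra.
  - apply Hint; lra.
Qed.

Ltac exp_ring :=
  match goal with |- _ = _ * exp ?b =>
    match goal with |- context [exp ?a] =>
      tryif constr_eq a b then fail else replace (exp a) with (exp b) by (f_equal; ring) end end; ring.

Lemma m_nonneg L T sigma (m mt mx mxx G Gx : R -> R -> R) Gb Gxb :
  0 < L -> 0 < T -> 0 < sigma -> 0 <= Gb -> 0 <= Gxb ->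
  UC 0 T 0 L m -> UC 0 T 0 L mx ->
  (forall t x, 0 < t < T -> 0 < x < L -> is_derive (fun s => m s x) t (mt t x) /\
      is_derive (m t) x (mx t x) /\ is_derive (mx t) x (mxx t x)) ->
  (forall t x, 0 < t < T -> 0 < x < L -> mt t x = sigma ^ 2 / 2 * mxx t x + G t x * mx t x + Gx t x * m t x) ->
  (forall t x, 0 < t < T -> 0 <= x <= L -> Rabs (G t x) <= Gb) ->
  (forall t x, 0 < t < T -> 0 < x < L -> Rabs (Gx t x) <= Gxb) ->
  (forall t, 0 < t < T -> sigma ^ 2 / 2 * mx t 0 + G t 0 * m t 0 = 0 /\ sigma ^ 2 / 2 * mx t L + G t L * m t L = 0) ->
  (forall x, 0 <= x <= L -> 0 <= m 0 x) ->
  forall t x, 0 <= t <= T -> 0 <= x <= L -> 0 <= m t x.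
Proof.
  intros HL HT Hsig HGb HGxb HU HUx Hder Heq HG HGx Hbc Hinit.
  assert (Hs2 : 0 < sigma ^ 2) by (apply pow_lt; lra).
  set (be := (2 * Gb / sigma ^ 2 + 1) / L).
  assert (Hbe : 0 < be) by (unfold be; apply Rdiv_lt_0_compat; auto; assert (0 <= 2 * Gb / sigma ^ 2) by (apply Rdiv_le_0_compat; lra); lra).
  assert (HbeL : be * L = 2 * Gb / sigma ^ 2 + 1) by (unfold be; field; lra).
  set (la := sigma ^ 2 / 2 * ((be * L) ^ 2 + 2 * be) + Gb * (be * L) + Gxb + 1).
  set (E := fun t x => exp (- (la * t) - be * (x - L / 2) ^ 2)).
  set (p := fun x => be * (2 * (x - L / 2))).
  assert (HE : forall t x, 0 < E t x) by (intros; apply exp_pos).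
  assert (Hp : forall x, 0 <= x <= L -> Rabs (p x) <= be * L).
  { intros x Hx. unfold p. rewrite Rabs_mult, Rabs_pos_eq by lra. apply Rmult_le_compat_l; [lra|].
    unfold Rabs; destruct Rcase_abs; lra. }
  assert (UCE : UC 0 T 0 L E).
  { apply (UC_ext _ _ _ _ (fun t x => (fun t => exp (- (la * t))) t * (fun x => exp (- (be * (x - L / 2) ^ 2))) x)).
    intros; unfold E; simpl. rewrite <- exp_plus. f_equal; ring.
    apply UC_mult; try lra. apply UC_ft; intros; auto_derive; auto. apply UC_fx; intros; auto_derive; auto. }
  assert (Hfwd : forall t1, 0 < t1 < T -> forall t x, 0 <= t <= t1 -> 0 <= x <= L -> - (E t x * m t x) <= 0).
  { intros t1 Ht1.
    apply (maxprin_fwd L t1 (fun t x => - (E t x * m t x)) (fun t x => - (E t x * (mt t x - la * m t x)))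
        (fun t x => - (E t x * (mx t x - p x * m t x)))
        (fun t x => - (E t x * (mxx t x - p x * mx t x - 2 * be * m t x - p x * (mx t x - p x * m t x))))); try lra.
    - apply UC_opp. apply (UC_sub 0 T 0 L); try lra. apply UC_mult; auto; lra.
    - apply UC_opp. apply (UC_sub 0 T 0 L); try lra. apply UC_mult; auto; try lra.
      apply (UC_ext _ _ _ _ (fun t x => mx t x + - ((fun t => 0) t + (fun x => p x) x * m t x))). intros; simpl; ring.
      apply UC_plus; auto. apply UC_opp. apply (UC_ext _ _ _ _ (fun t x => 0 + p x * m t x)). intros; ring.
      apply UC_plus. apply UC_ft; intros; auto_derive; auto. apply UC_mult; try lra; auto.
      apply UC_fx; intros; unfold p; auto_derive; auto.
    - intros s x Hs Hx. destruct (Hder s x ltac:(lra) Hx) as [D _].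
      assert (DE : is_derive (fun t => E t x) s (- la * E s x)).
      { unfold E. auto_derive; auto. exp_ring. }
      apply (der_ext _ _ s _ _ (der_aff _ s _ (-1) 0 0 (der_mul _ _ s _ _ DE D))). intros; ring. simpl; ring.
    - intros s x Hs Hx. destruct (Hder s x ltac:(lra) Hx) as [_ [D _]].
      assert (DE : is_derive (fun x => E s x) x (- p x * E s x)).
      { unfold E, p. auto_derive; auto. exp_ring. }
      apply (der_ext _ _ x _ _ (der_aff _ x _ (-1) 0 0 (der_mul _ _ x _ _ DE D))). intros; ring. simpl; ring.
    - intros s x Hs Hx. destruct (Hder s x ltac:(lra) Hx) as [_ [D D2]].
      assert (DE : is_derive (fun x => E s x) x (- p x * E s x)).
      { unfold E, p. auto_derive; auto. exp_ring. }
      assert (Dp : is_derive p x (2 * be)) by (unfold p; auto_derive; auto; ring).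
      assert (DQ : is_derive (fun z => mx s z - p z * m s z) x (mxx s x - (2 * be * m s x + p x * mx s x))).
      { apply (der_ext _ _ x _ _ (der_add _ _ x _ _ D2 (der_aff _ x _ (-1) 0 0 (der_mul _ _ x _ _ Dp D)))).
        intros; ring. simpl; ring. }
      apply (der_ext _ _ x _ _ (der_aff _ x _ (-1) 0 0 (der_mul _ _ x _ _ DE DQ))). intros; ring. simpl; ring.
    - intros x Hx. specialize (Hinit x Hx). specialize (HE 0 x). assert (0 <= E 0 x * m 0 x) by (apply Rmult_le_pos; lra). lra.
    - intros s Hs Hpos. destruct (Hbc s ltac:(lra)) as [B0 _].
      assert (Hm : m s 0 < 0).
      { destruct (Rle_or_lt 0 (m s 0)); auto. assert (0 <= E s 0 * m s 0) by (apply Rmult_le_pos; auto; apply Rlt_le, HE). lra. }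
      assert (Hmx : mx s 0 = - (2 / sigma ^ 2) * G s 0 * m s 0).
      { apply Rmult_eq_reg_l with (sigma ^ 2 / 2); [|lra].
        replace (sigma ^ 2 / 2 * (- (2 / sigma ^ 2) * G s 0 * m s 0)) with (- (G s 0 * m s 0)) by (field; lra). lra. }
      assert (Hp0 : p 0 = - (be * L)) by (unfold p; field).
      specialize (HG s 0 ltac:(lra) ltac:(lra)).
      assert (Hfac : 0 < - (2 / sigma ^ 2) * G s 0 + be * L).
      { rewrite HbeL.
        assert (E1 : 2 * Gb / sigma ^ 2 - (2 / sigma ^ 2) * G s 0 = (2 / sigma ^ 2) * (Gb - G s 0)) by (field; lra).
        assert (0 <= (2 / sigma ^ 2) * (Gb - G s 0)).
        { apply Rmult_le_pos. apply Rdiv_le_0_compat; lra. unfold Rabs in HG; destruct Rcase_abs in HG; lra. }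
        lra. }
      rewrite Hmx, Hp0.
      replace (- (E s 0 * (- (2 / sigma ^ 2) * G s 0 * m s 0 - - (be * L) * m s 0))) with (E s 0 * ((- (2 / sigma ^ 2) * G s 0 + be * L) * (- m s 0))) by ring.
      apply Rmult_lt_0_compat; auto. apply Rmult_lt_0_compat; lra.
    - intros s Hs Hpos. destruct (Hbc s ltac:(lra)) as [_ BL].
      assert (Hm : m s L < 0).
      { destruct (Rle_or_lt 0 (m s L)); auto. assert (0 <= E s L * m s L) by (apply Rmult_le_pos; auto; apply Rlt_le, HE). lra. }
      assert (Hmx : mx s L = - (2 / sigma ^ 2) * G s L * m s L).
      { apply Rmult_eq_reg_l with (sigma ^ 2 / 2); [|lra].
        replace (sigma ^ 2 / 2 * (- (2 / sigma ^ 2) * G s L * m s L)) with (- (G s L * m s L)) by (field; lra). lra. }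
      assert (HpL : p L = be * L) by (unfold p; field).
      specialize (HG s L ltac:(lra) ltac:(lra)).
      assert (Hfac : 0 < (2 / sigma ^ 2) * G s L + be * L).
      { rewrite HbeL.
        assert (E1 : 2 * Gb / sigma ^ 2 + (2 / sigma ^ 2) * G s L = (2 / sigma ^ 2) * (Gb + G s L)) by (field; lra).
        assert (0 <= (2 / sigma ^ 2) * (Gb + G s L)).
        { apply Rmult_le_pos. apply Rdiv_le_0_compat; lra. unfold Rabs in HG; destruct Rcase_abs in HG; lra. }
        lra. }
      rewrite Hmx, HpL.
      replace (- (E s L * (- (2 / sigma ^ 2) * G s L * m s L - be * L * m s L))) with (- (E s L * (((2 / sigma ^ 2) * G s L + be * L) * (- m s L)))) by ring.
      assert (0 < E s L * (((2 / sigma ^ 2) * G s L + be * L) * (- m s L))).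
      { apply Rmult_lt_0_compat; auto. apply Rmult_lt_0_compat; lra. }
      lra.
    - intros s x Hs Hx Hpos Hwx Hwxx.
      pose proof (HE s x) as HEs.
      assert (Hm : m s x < 0).
      { destruct (Rle_or_lt 0 (m s x)); auto. assert (0 <= E s x * m s x) by (apply Rmult_le_pos; lra). lra. }
      assert (Hmx : mx s x = p x * m s x).
      { assert (E s x * (mx s x - p x * m s x) = 0) by lra.
        apply Rmult_integral in H. destruct H; lra. }
      assert (Hmxx : p x * mx s x + 2 * be * m s x <= mxx s x).
      { assert (H0 : 0 <= E s x * (mxx s x - p x * mx s x - 2 * be * m s x - p x * (mx s x - p x * m s x))) by lra.
        rewrite Hmx in H0.
        assert (H1 : 0 <= mxx s x - p x * (p x * m s x) - 2 * be * m s x - p x * (p x * m s x - p x * m s x)).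
        { apply Rmult_le_reg_l with (E s x); auto. rewrite Rmult_0_r. exact H0. }
        rewrite Hmx. lra. }
      rewrite (Heq s x ltac:(lra) Hx), Hmx.
      set (k := sigma ^ 2 / 2 * (p x ^ 2 + 2 * be) + G s x * p x + Gx s x).
      assert (Hk : k < la).
      { unfold k, la. specialize (Hp x ltac:(lra)). specialize (HG s x ltac:(lra) ltac:(lra)). specialize (HGx s x ltac:(lra) Hx).
        assert (Hp2 : p x ^ 2 <= (be * L) ^ 2).
        { rewrite <- (pow2_abs (p x)). apply pow_incr. split; [apply Rabs_pos|auto]. }
        assert (sigma ^ 2 / 2 * (p x ^ 2 + 2 * be) <= sigma ^ 2 / 2 * ((be * L) ^ 2 + 2 * be)) by (apply Rmult_le_compat_l; lra).
        assert (G s x * p x <= Gb * (be * L)).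
        { eapply Rle_trans. apply Rle_abs. rewrite Rabs_mult. apply Rmult_le_compat; auto; apply Rabs_pos. }
        assert (Gx s x <= Gxb) by (eapply Rle_trans; [apply Rle_abs|auto]).
        lra. }
      assert (Hmain : 0 < sigma ^ 2 / 2 * mxx s x + G s x * (p x * m s x) + Gx s x * m s x - la * m s x).
      { rewrite Hmx in Hmxx.
        assert (sigma ^ 2 / 2 * (p x * (p x * m s x) + 2 * be * m s x) <= sigma ^ 2 / 2 * mxx s x) by (apply Rmult_le_compat_l; lra).
        assert (0 < (la - k) * (- m s x)) by (apply Rmult_lt_0_compat; lra).
        unfold k in H0. nra. }
      assert (0 < E s x * (sigma ^ 2 / 2 * mxx s x + G s x * (p x * m s x) + Gx s x * m s x - la * m s x)) by (apply Rmult_lt_0_compat; auto).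
      lra.
  }
  intros t x Ht Hx.
  destruct (Rlt_or_le t T) as [HtT|HtT].
  - destruct (Req_dec t 0) as [E0|E0].
    + subst t. apply Hinit; auto.
    + assert (Hw := Hfwd t ltac:(lra) t x ltac:(lra) Hx).
      pose proof (HE t x). destruct (Rle_or_lt 0 (m t x)); auto.
      assert (0 < E t x * - m t x) by (apply Rmult_lt_0_compat; lra). lra.
  - assert (t = T) by lra. subst t.
    assert (Hc : forall z, 0 < z < T -> - m z x <= 0).
    { intros z Hz. assert (Hw := Hfwd z Hz z x ltac:(lra) Hx).
      pose proof (HE z x). destruct (Rle_or_lt 0 (m z x)); [lra|].
      assert (0 < E z x * - m z x) by (apply Rmult_lt_0_compat; lra). lra. }
    assert (- m T x <= 0).
    { apply (closure_le (fun z => - m z x) 0 T); try lra.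
      apply (cseg_ext _ _ (fun w => (-1) * m w x + 0 * w + 0)). intros; ring. apply cseg_aff.
      apply (UC_cseg_t 0 T 0 L); auto; lra. auto. }
    lra.
Qed.

Lemma RInt_minusR (f g : R -> R) a b : ex_RInt f a b -> ex_RInt g a b ->
  RInt (fun x => f x - g x) a b = RInt f a b - RInt g a b.
Proof. intros H1 H2. exact (RInt_minus f g a b H1 H2). Qed.

Lemma ex_RInt_minusR (f g : R -> R) a b : ex_RInt f a b -> ex_RInt g a b -> ex_RInt (fun x => f x - g x) a b.
Proof. intros H1 H2. exact (ex_RInt_minus f g a b H1 H2). Qed.

Lemma RInt_scalR (f : R -> R) a b l : ex_RInt f a b -> RInt (fun x => l * f x) a b = l * RInt f a b.
Proof. intros H. exact (RInt_scal f a b l H). Qed.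

Lemma ex_RInt_scalR (f : R -> R) a b l : ex_RInt f a b -> ex_RInt (fun x => l * f x) a b.
Proof. intros H. exact (ex_RInt_scal f a b l H). Qed.

Lemma RInt_pointR (f : R -> R) a : RInt f a a = 0.
Proof. exact (RInt_point a f). Qed.

Lemma ex_RInt_cseg (f : R -> R) a b : a < b -> (forall z, a <= z <= b -> cseg a b f z) -> ex_RInt f a b.
Proof.
  intros Hab Hc. apply (ex_RInt_ext (fun x => f (clamp a b x))).
  - intros x Hx. rewrite Rmin_left, Rmax_right in Hx by lra. rewrite clamp_id; auto; lra.
  - apply (@ex_RInt_continuous R_CompleteNormedModule). intros z Hz.
    rewrite Rmin_left, Rmax_right in Hz by lra.
    apply continuity_pt_filterlim. apply cseg_clamp; auto; lra.
Qed.

Lemma abs_RInt_bound (f : R -> R) a b K : a < b -> ex_RInt f a b -> (forall z, a <= z <= b -> Rabs (f z) <= K) ->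
  Rabs (RInt f a b) <= (b - a) * K.
Proof. intros Hab Hex Hb. apply abs_RInt_le_const; auto; lra. Qed.

Lemma zero_deriv_const (f f1 : R -> R) a b : a < b -> (forall z, a <= z <= b -> cseg a b f z) ->
  (forall x, a < x < b -> is_derive f x (f1 x)) -> (forall x, a < x < b -> f1 x = 0) -> f b = f a.
Proof.
  intros Hab Hc Hd H0. destruct (MVT_open f f1 a b Hab Hc Hd) as [c [Hc1 Hc2]].
  rewrite H0 in Hc2 by auto. lra.
Qed.

Lemma ftc_within (P g : R -> R) L : 0 < L -> (forall z, 0 <= z <= L -> cseg 0 L P z) ->
  (forall z, 0 <= z <= L -> cseg 0 L g z) -> (forall x, 0 < x < L -> is_derive P x (g x)) ->
  RInt g 0 L = P L - P 0.
Proof.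
  intros HL HP Hg Hd.
  set (gt := fun y => g (clamp 0 L y)).
  assert (Hgt : forall y, continuous gt y).
  { intros y. apply continuity_pt_filterlim.
    apply (continuity_pt_ext_loc (fun x => g (clamp 0 L (clamp 0 L x)))).
    - exists (mkposreal 1 Rlt_0_1). intros z _. unfold gt. rewrite (clamp_id 0 L (clamp 0 L z)); auto. apply clamp_in; lra.
    - apply (continuity_pt_comp (clamp 0 L) (fun x => g (clamp 0 L x))).
      + apply continuity_pt_ed. intros eps He. exists eps; split; auto. intros z Hz. eapply Rle_lt_trans. apply clamp_lip. lra. auto.
      + apply cseg_clamp; auto. lra. apply clamp_in; lra. apply Hg. apply clamp_in; lra. }
  set (Ig := fun x => RInt gt 0 x).
  assert (HIg : forall x, is_derive Ig x (gt x)).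
  { intros x. apply (is_derive_RInt gt Ig 0 x). exists (mkposreal 1 Rlt_0_1). intros z _.
    unfold Ig. apply (@RInt_correct R_CompleteNormedModule). apply (@ex_RInt_continuous R_CompleteNormedModule). intros; apply Hgt. apply Hgt. }
  assert (HQ : (fun x => Ig x - P x) L = (fun x => Ig x - P x) 0).
  { apply (zero_deriv_const (fun x => Ig x - P x) (fun x => gt x - g x) 0 L HL).
    - intros z Hz. apply cseg_diff; auto.
      intros eps He. assert (Hc : continuity_pt Ig z) by (apply continuity_pt_filterlim; apply (@ex_derive_continuous R_AbsRing R_NormedModule); exists (gt z); auto).
      destruct (proj1 (continuity_pt_filterlim _ _) Hc (fun w => Rabs (w - Ig z) < eps)) as [[d Hd0] Hdd].
      { exists (mkposreal eps He). intros w Hw. change (Rabs (w - Ig z) < eps) in Hw. exact Hw. }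
      exists d; split; [exact Hd0|]. intros w _ Hw. apply Hdd. change (Rabs (w - z) < d). auto.
    - intros x Hx. apply (der_ext _ _ x _ _ (der_add _ _ x _ _ (HIg x) (der_aff _ x _ (-1) 0 0 (Hd x Hx)))).
      intros; ring. simpl; ring.
    - intros x Hx. unfold gt. rewrite clamp_id; lra. }
  simpl in HQ. unfold Ig in HQ. rewrite RInt_pointR in HQ.
  assert (RInt gt 0 L = RInt g 0 L).
  { apply RInt_ext. intros x Hx. rewrite Rmin_left, Rmax_right in Hx by lra. unfold gt. rewrite clamp_id; lra. }
  lra.
Qed.




Lemma mass_const L T (m mt P : R -> R -> R) :
  0 < L -> 0 < T -> UC 0 T 0 L m -> UC 0 T 0 L mt ->
  (forall t x, 0 < t < T -> 0 < x < L -> is_derive (fun s => m s x) t (mt t x)) ->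
  (forall t, 0 < t < T -> (forall z, 0 <= z <= L -> cseg 0 L (P t) z) /\
      (forall x, 0 < x < L -> is_derive (P t) x (mt t x)) /\ P t 0 = 0 /\ P t L = 0) ->
  forall t, 0 <= t <= T -> RInt (m t) 0 L = RInt (m 0) 0 L.
Proof.
  intros HL HT HU HUt Hder HP.
  assert (exm : forall t, 0 <= t <= T -> ex_RInt (m t) 0 L).
  { intros t Ht. apply ex_RInt_cseg; auto. intros z Hz. apply (UC_cseg 0 T); auto. }
  assert (exmt : forall t, 0 <= t <= T -> ex_RInt (mt t) 0 L).
  { intros t Ht. apply ex_RInt_cseg; auto. intros z Hz. apply (UC_cseg 0 T); auto. }
  assert (HJ : forall t, 0 < t < T -> RInt (mt t) 0 L = 0).
  { intros t Ht. destruct (HP t Ht) as [Hc [Hd [H0 H1]]].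
    rewrite (ftc_within (P t) (mt t) L HL Hc); auto. lra. intros z Hz. apply (UC_cseg 0 T); auto; lra. }
  set (I := fun t => RInt (m t) 0 L).
  assert (HIc : forall t, 0 <= t <= T -> cseg 0 T I t).
  { intros t Ht eps He. destruct (HU (eps / (2 * L))) as [d [Hd Hu]]. apply Rdiv_lt_0_compat; lra.
    exists d; split; auto. intros s Hs Hst. unfold I.
    rewrite <- RInt_minusR by auto.
    eapply Rle_lt_trans. apply (abs_RInt_bound _ 0 L (eps / (2 * L))); auto. apply ex_RInt_minusR; auto.
    intros z Hz. left. apply Hu; auto. rewrite Rminus_eq_0, Rabs_R0; auto.
    replace ((L - 0) * (eps / (2 * L))) with (eps / 2) by (field; lra). lra. }
  assert (HId : forall t, 0 < t < T -> is_derive I t (RInt (mt t) 0 L)).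
  { intros t Ht. apply is_derive_Reals. intros eps He.
    destruct (HUt (eps / (2 * L))) as [d1 [Hd1 Hu]]. apply Rdiv_lt_0_compat; lra.
    set (d := Rmin d1 (Rmin (t / 2) ((T - t) / 2))).
    assert (Hdp : 0 < d) by (unfold d; repeat apply Rmin_glb_lt; lra).
    pose proof (Rmin_l d1 (Rmin (t / 2) ((T - t) / 2))). pose proof (Rmin_r d1 (Rmin (t / 2) ((T - t) / 2))).
    pose proof (Rmin_l (t / 2) ((T - t) / 2)). pose proof (Rmin_r (t / 2) ((T - t) / 2)). fold d in H, H0.
    exists (mkposreal d Hdp). intros h Hh0 Hh. simpl in Hh.
    assert (Hha : - d < h < d) by (unfold Rabs in Hh; destruct Rcase_abs in Hh; lra).
    set (F := fun y => m (t + h) y - m t y - h * mt t y).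
    assert (HF : forall y, 0 <= y <= L -> Rabs (F y) <= eps / (2 * L) * Rabs h).
    { assert (HFi : forall y, 0 < y < L -> Rabs (F y) <= eps / (2 * L) * Rabs h).
      { intros y Hy.
        assert (Hmv : exists c, Rabs (c - t) < d1 /\ 0 < c < T /\ m (t + h) y - m t y = mt c y * h).
        { destruct (Rlt_or_le 0 h) as [Hp|Hn].
          - destruct (MVT_open (fun s => m s y) (fun s => mt s y) t (t + h)) as [c [Hc1 Hc2]]; try lra.
            + intros z Hz. apply (cseg_sub 0 T); try lra. apply (UC_cseg_t 0 T 0 L); auto; lra.
            + intros z Hz. apply Hder; lra.
            + exists c. split. rewrite Rabs_pos_eq; lra. split. lra. rewrite Hc2. ring.
          - assert (h < 0) by lra.
            destruct (MVT_open (fun s => m s y) (fun s => mt s y) (t + h) t) as [c [Hc1 Hc2]]; try lra.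
            + intros z Hz. apply (cseg_sub 0 T); try lra. apply (UC_cseg_t 0 T 0 L); auto; lra.
            + intros z Hz. apply Hder; lra.
            + exists c. split. rewrite Rabs_left; lra. split. lra. replace (mt c y * h) with (- (mt c y * (t - (t + h)))) by ring. lra. }
        destruct Hmv as [c [Hc1 [Hc2 Hc3]]]. unfold F. rewrite Hc3.
        replace (mt c y * h - h * mt t y) with ((mt c y - mt t y) * h) by ring. rewrite Rabs_mult.
        apply Rmult_le_compat_r. apply Rabs_pos. left. apply Hu; try lra. rewrite Rminus_eq_0, Rabs_R0; auto. }
      intros y Hy. apply (closure_abs F 0 L); auto.
      unfold F. apply cseg_diff. apply cseg_diff; apply (UC_cseg 0 T); auto; lra.
      apply (cseg_ext _ _ (fun w => h * mt t w + 0 * w + 0)). intros; ring. apply cseg_aff. apply (UC_cseg 0 T); auto; lra. }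
    assert (HRF : RInt F 0 L = I (t + h) - I t - h * RInt (mt t) 0 L).
    { assert (E1 : ex_RInt (m (t + h)) 0 L) by (apply exm; lra).
      assert (E2 : ex_RInt (m t) 0 L) by (apply exm; lra).
      assert (E3 : ex_RInt (mt t) 0 L) by (apply exmt; lra).
      unfold F, I.
      rewrite (RInt_minusR (fun y => m (t + h) y - m t y) (fun y => h * mt t y) 0 L (ex_RInt_minusR _ _ _ _ E1 E2) (ex_RInt_scalR _ _ _ h E3)).
      rewrite (RInt_minusR (m (t + h)) (m t) 0 L E1 E2).
      rewrite (RInt_scalR (mt t) 0 L h E3). reflexivity. }
    assert (HexF : ex_RInt F 0 L).
    { unfold F. apply ex_RInt_minusR. apply ex_RInt_minusR; apply exm; lra. apply ex_RInt_scalR; apply exmt; lra. }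
    pose proof (abs_RInt_bound F 0 L _ HL HexF HF) as Hb. rewrite HRF in Hb.
    assert (Hah : 0 < Rabs h) by (apply Rabs_pos_lt; auto).
    replace ((I (t + h) - I t) / h - RInt (mt t) 0 L) with ((I (t + h) - I t - h * RInt (mt t) 0 L) / h) by (field; auto).
    unfold Rdiv. rewrite Rabs_mult, Rabs_inv.
    apply Rle_lt_trans with ((L - 0) * (eps / (2 * L) * Rabs h) * / Rabs h).
    apply Rmult_le_compat_r. left; apply Rinv_0_lt_compat; auto. auto.
    replace ((L - 0) * (eps / (2 * L) * Rabs h) * / Rabs h) with (eps / 2) by (field; lra). lra. }
  intros t Ht. change (I t = I 0).
  destruct (Req_dec t 0) as [E|E]. subst; reflexivity.
  apply (zero_deriv_const I (fun s => RInt (mt s) 0 L) 0 t); try lra.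
  - intros z Hz. apply (cseg_sub 0 T); try lra. apply HIc; lra.
  - intros x Hx. apply HId; lra.
  - intros x Hx. apply HJ; lra.
Qed.



Lemma lip_full L T r sigma u ut ux uxx H M :
  usol L T r sigma u ut ux uxx H -> 0 < L -> 0 < T -> 0 < r -> 0 < M ->
  (forall x y, 0 <= x <= L -> 0 <= y <= L -> Rabs (u T x - u T y) <= M * Rabs (x - y)) ->
  forall t x y, 0 <= t <= T -> 0 <= x <= L -> 0 <= y <= L -> Rabs (u t x - u t y) <= M * Rabs (x - y).
Proof.
  intros [HU [HUx [Hder [Heq Hbc]]]] HL HT Hr HM Hterm.
  assert (Hcore : forall e, (e = 1 \/ e = -1) -> forall t x y, 0 < t <= T -> (0 <= y /\ y <= x /\ x <= L) ->
     e * (u t x - u t y) <= M * (x - y)).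
  { intros e He t x y Ht Hxy.
    destruct (Req_dec t T) as [ET|ET].
    - subst t. specialize (Hterm x y ltac:(lra) ltac:(lra)). rewrite Rabs_pos_eq with (x := x - y) in Hterm by lra.
      destruct He; subst e; unfold Rabs in Hterm; destruct Rcase_abs in Hterm; lra.
    - apply (lipschitz_core L T r sigma M e (t / 2) u ut ux uxx H); auto; try lra.
      intros x' y' Hxy'. specialize (Hterm x' y' ltac:(lra) ltac:(lra)). rewrite Rabs_pos_eq with (x := x' - y') in Hterm by lra.
      destruct He; subst e; unfold Rabs in Hterm; destruct Rcase_abs in Hterm; lra. }
  assert (Hpos : forall t x y, 0 < t <= T -> 0 <= x <= L -> 0 <= y <= L -> Rabs (u t x - u t y) <= M * Rabs (x - y)).
  { intros t x y Ht Hx Hy. destruct (Rle_or_lt y x) as [Hle|Hlt].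
    - pose proof (Hcore 1 (or_introl eq_refl) t x y Ht ltac:(lra)). pose proof (Hcore (-1) (or_intror eq_refl) t x y Ht ltac:(lra)).
      rewrite (Rabs_pos_eq (x - y)) by lra. unfold Rabs; destruct Rcase_abs; lra.
    - pose proof (Hcore 1 (or_introl eq_refl) t y x Ht ltac:(lra)). pose proof (Hcore (-1) (or_intror eq_refl) t y x Ht ltac:(lra)).
      rewrite (Rabs_left (x - y)) by lra. unfold Rabs; destruct Rcase_abs; lra. }
  intros t x y Ht Hx Hy. destruct (Req_dec t 0) as [E|E].
  - subst t. apply (closure_abs (fun s => u s x - u s y) 0 T); try lra.
    apply cseg_diff; apply (UC_cseg_t 0 T 0 L); auto; lra.
    intros z Hz. apply Hpos; lra.
  - apply Hpos; lra.
Qed.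

Lemma ux_bound L T r sigma u ut ux uxx H M :
  usol L T r sigma u ut ux uxx H -> 0 < L -> 0 < T -> 0 <= M ->
  (forall t x y, 0 <= t <= T -> 0 <= x <= L -> 0 <= y <= L -> Rabs (u t x - u t y) <= M * Rabs (x - y)) ->
  forall t x, 0 <= t <= T -> 0 <= x <= L -> Rabs (ux t x) <= M.
Proof.
  intros [HU [HUx [Hder [Heq Hbc]]]] HL HT HM Hlip.
  apply (closure2_abs 0 T 0 L ux M HT HL HUx).
  intros t x Ht Hx. destruct (Hder t x Ht Hx) as [_ [D _]].
  apply (deriv_bound (u t) x (ux t x) M D).
  exists (Rmin x (L - x)). split. apply Rmin_glb_lt; lra.
  intros h Hh0 Hh. pose proof (Rmin_l x (L - x)). pose proof (Rmin_r x (L - x)).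
  assert (-x < h < L - x) by (unfold Rabs in Hh; destruct Rcase_abs in Hh; lra).
  replace h with ((x + h) - x) at 2 by ring. apply Hlip; lra.
Qed.

Lemma cseg_mult a b f g z : cseg a b f z -> cseg a b g z -> cseg a b (fun w => f w * g w) z.
Proof.
  intros Hf Hg eps He.
  set (Kg := Rabs (g z) + 1). set (Kf := Rabs (f z) + 1).
  assert (HKg : 0 < Kg) by (unfold Kg; pose proof (Rabs_pos (g z)); lra).
  assert (HKf : 0 < Kf) by (unfold Kf; pose proof (Rabs_pos (f z)); lra).
  destruct (Hf (Rmin 1 (eps / (2 * Kg)))) as [d1 [Hd1 H1]]. apply Rmin_glb_lt; [lra|apply Rdiv_lt_0_compat; lra].
  destruct (Hg (Rmin 1 (eps / (2 * Kf)))) as [d2 [Hd2 H2]]. apply Rmin_glb_lt; [lra|apply Rdiv_lt_0_compat; lra].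
  exists (Rmin d1 d2). split. apply Rmin_glb_lt; auto. intros w Hw Hwz.
  pose proof (Rmin_l d1 d2). pose proof (Rmin_r d1 d2).
  specialize (H1 w Hw ltac:(lra)). specialize (H2 w Hw ltac:(lra)).
  pose proof (Rmin_l 1 (eps / (2 * Kg))). pose proof (Rmin_r 1 (eps / (2 * Kg))).
  pose proof (Rmin_l 1 (eps / (2 * Kf))). pose proof (Rmin_r 1 (eps / (2 * Kf))).
  replace (f w * g w - f z * g z) with ((f w - f z) * g w + f z * (g w - g z)) by ring.
  eapply Rle_lt_trans. apply Rabs_triang. rewrite !Rabs_mult.
  assert (Hgw : Rabs (g w) <= Kg).
  { unfold Kg. pose proof (Rabs_triang_inv (g w) (g z)). lra. }
  assert (Ha : Rabs (f w - f z) * Rabs (g w) <= eps / (2 * Kg) * Kg).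
  { apply Rmult_le_compat; try apply Rabs_pos; lra. }
  assert (Hb : Rabs (f z) * Rabs (g w - g z) < Kf * (eps / (2 * Kf))).
  { apply Rle_lt_trans with (Kf * Rabs (g w - g z)). apply Rmult_le_compat_r. apply Rabs_pos. unfold Kf; lra.
    apply Rmult_lt_compat_l; lra. }
  replace (eps / (2 * Kg) * Kg) with (eps / 2) in Ha by (field; lra).
  replace (Kf * (eps / (2 * Kf))) with (eps / 2) in Hb by (field; lra). lra.
Qed.

Lemma cont_seg_cseg L g : cont_on_seg L g -> forall z, 0 <= z <= L -> cseg 0 L g z.
Proof.
  intros Hc z Hz eps He. specialize (Hc z Hz).
  specialize (Hc (fun w => ball (g z) eps w) (locally_ball (g z) (mkposreal eps He))).
  unfold filtermap, within in Hc. destruct Hc as [[d Hd] Hb].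
  exists d; split; auto. intros w Hw Hwz. specialize (Hb w). simpl in Hb.
  change (Rabs (g w - g z) < eps). apply Hb; auto.
Qed.

Lemma lub_le (E : R -> Prop) K : (forall v, E v -> v <= K) -> Rbar_le (Lub_Rbar E) (Finite K).
Proof.
  intros H. destruct (Lub_Rbar_correct E) as [_ Hl]. apply Hl. intros v Hv. simpl. apply H; auto.
Qed.

Lemma holder_assemble T L u U M C2 : 0 < T -> 0 < L -> 0 <= M -> 0 <= C2 ->
  (forall t x, 0 <= t <= T -> 0 <= x <= L -> Rabs (u t x) <= U) ->
  (forall t x y, 0 <= t <= T -> 0 <= x <= L -> 0 <= y <= L -> Rabs (u t x - u t y) <= M * Rabs (x - y)) ->
  (forall t s x, 0 <= t <= T -> 0 <= s <= T -> 0 <= x <= L -> Rabs (u t x - u s x) <= C2 * sqrt (Rabs (t - s))) ->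
  Rbar_le (holder13_norm T L u) (Finite (U + (M + C2) * Rmax 1 (T + L))).
Proof.
  intros HT HL HM HC Hb Hlip Hhol.
  set (D := Rmax 1 (T + L)). assert (HD1 : 1 <= D) by apply Rmax_l. assert (HD2 : T + L <= D) by apply Rmax_r.
  unfold holder13_norm.
  change (Finite (U + (M + C2) * D)) with (Rbar_plus (Finite U) (Finite ((M + C2) * D))).
  apply Rbar_plus_le_compat.
  - apply lub_le. intros v [t [x [[Ht Hx] ->]]]. apply Hb; auto.
  - apply lub_le. intros v [t [x [s [y [[Ht Hx] [[Hs Hy] [Hne ->]]]]]]].
    set (d := dist2 t x s y).
    assert (Hsq : forall a, a <> 0 -> 0 < a ^ 2).
    { intros a Ha. destruct (Rtotal_order a 0) as [H|[H|H]]; [nra|contradiction|nra]. }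
    assert (Hd : 0 < d).
    { unfold d, dist2. apply sqrt_lt_R0.
      pose proof (pow2_ge_0 (t - s)). pose proof (pow2_ge_0 (x - y)).
      destruct (Req_dec t s) as [E1|E1].
      - destruct (Req_dec x y) as [E2|E2].
        + subst. contradiction Hne; reflexivity.
        + assert (0 < (x - y) ^ 2) by (apply Hsq; lra). lra.
      - assert (0 < (t - s) ^ 2) by (apply Hsq; lra). lra. }
    assert (Hts : Rabs (t - s) <= d).
    { unfold d, dist2. rewrite <- (sqrt_pow2 (Rabs (t - s))) by apply Rabs_pos.
      apply sqrt_le_1_alt. rewrite pow2_abs. pose proof (pow2_ge_0 (x - y)). lra. }
    assert (Hxy : Rabs (x - y) <= d).
    { unfold d, dist2. rewrite <- (sqrt_pow2 (Rabs (x - y))) by apply Rabs_pos.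
      apply sqrt_le_1_alt. rewrite pow2_abs. pose proof (pow2_ge_0 (t - s)). lra. }
    assert (HdD : d <= D).
    { unfold d, dist2. apply Rle_trans with (Rabs (t - s) + Rabs (x - y)).
      - rewrite <- (sqrt_pow2 (Rabs (t - s) + Rabs (x - y))) by (pose proof (Rabs_pos (t - s)); pose proof (Rabs_pos (x - y)); lra).
        apply sqrt_le_1_alt. rewrite <- (pow2_abs (t - s)), <- (pow2_abs (x - y)).
        pose proof (Rabs_pos (t - s)); pose proof (Rabs_pos (x - y)). nra.
      - assert (Rabs (t - s) <= T) by (unfold Rabs; destruct Rcase_abs; lra).
        assert (Rabs (x - y) <= L) by (unfold Rabs; destruct Rcase_abs; lra). lra. }
    set (R3 := Rpower d (1 / 3)).
    assert (HR3 : 0 < R3) by (unfold R3, Rpower; apply exp_pos).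
    assert (Hd3 : d = R3 * Rpower d (2 / 3)).
    { unfold R3. rewrite <- Rpower_plus. replace (1 / 3 + 2 / 3) with 1 by field. rewrite Rpower_1; auto. }
    assert (H23 : Rpower d (2 / 3) <= D).
    { apply Rle_trans with (Rpower D (2 / 3)). apply Rle_Rpower_l; lra.
      rewrite <- (Rpower_1 D) at 2 by lra. apply Rle_Rpower; lra. }
    assert (Hsd : sqrt d = R3 * Rpower d (1 / 6)).
    { rewrite <- Rpower_sqrt by auto. unfold R3. rewrite <- Rpower_plus. f_equal. field. }
    assert (H16 : Rpower d (1 / 6) <= D).
    { apply Rle_trans with (Rpower D (1 / 6)). apply Rle_Rpower_l; lra.
      rewrite <- (Rpower_1 D) at 2 by lra. apply Rle_Rpower; lra. }
    assert (Hmain : Rabs (u t x - u s y) <= (M + C2) * D * R3).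
    { replace (u t x - u s y) with ((u t x - u t y) + (u t y - u s y)) by ring.
      eapply Rle_trans. apply Rabs_triang.
      pose proof (Hlip t x y Ht Hx Hy). pose proof (Hhol t s y Ht Hs Hy).
      assert (M * Rabs (x - y) <= M * (R3 * D)).
      { apply Rmult_le_compat_l; auto. rewrite Hd3 in Hxy. eapply Rle_trans. apply Hxy.
        apply Rmult_le_compat_l; lra. }
      assert (C2 * sqrt (Rabs (t - s)) <= C2 * (R3 * D)).
      { apply Rmult_le_compat_l; auto. apply Rle_trans with (sqrt d). apply sqrt_le_1_alt; auto.
        rewrite Hsd. apply Rmult_le_compat_l; lra. }
      nra. }
    fold R3. unfold Rdiv. apply Rmult_le_reg_r with R3; auto.
    rewrite Rmult_assoc, Rinv_l, Rmult_1_r by lra. lra.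
Qed.



Theorem lemma4p2
  (L T r eps gamma : R) (uT uT1 uT2 m01 m02 m0 : R -> R)
  (HL : 0 < L) (HT : 0 < T) (Hr : 0 < r) (Heps : 0 < eps)
  (Hgamma : 0 < gamma)
  (HuT : C2gamma L gamma uT uT1 uT2)
  (Hm0 : C2gamma L gamma m0 m01 m02)
  (HuT_bc : uT1 0 = 0 /\ uT1 L = 0)
  (Hm0_bc : m0 0 = 0 /\ m01 0 = 0 /\ m0 L = 0 /\ m01 L = 0)
  (Hm0_pos : forall x, 0 <= x <= L -> 0 <= m0 x)
  (Hm0_mass : RInt m0 0 L = 1)
  (HuT_pos : forall x, 0 <= x <= L -> 0 <= uT x) :
  exists C : R,
    forall sigma : R, 0 < sigma <= 1 ->
    forall u m : R -> R -> R,
      classical_solution L T r eps sigma uT m0 u m ->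
      Rbar_le (holder13_norm T L u) (Finite C).
Proof.
  destruct HuT as [cuT [cuT1 [_ [duT _]]]].
  destruct (evt1 (fun x => Rabs (uT1 x)) 0 L ltac:(lra)) as [z1 [Hz1 Hmax1]].
  { intros z Hz e He. destruct (cont_seg_cseg L uT1 cuT1 z Hz e He) as [d [Hd Hw]]. exists d; split; auto.
    intros w Hw1 Hw2. eapply Rle_lt_trans. apply Rabs_triang_inv2. auto. }
  destruct (evt1 uT 0 L ltac:(lra) (cont_seg_cseg L uT cuT)) as [z2 [Hz2 Hmax2]].
  set (Kt := Rabs (uT1 z1)). set (KU := uT z2).
  assert (HKU : 0 <= KU) by (apply HuT_pos; auto).
  set (M1 := Kt + 1).
  assert (HM1 : 0 < M1) by (unfold M1, Kt; pose proof (Rabs_pos (uT1 z1)); lra).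
  assert (HuTlip0 : forall x y, 0 <= y <= L -> y < x <= L -> Rabs (uT x - uT y) <= M1 * Rabs (x - y)).
  { intros x y Hy Hx. destruct (MVT_open uT uT1 y x ltac:(lra)) as [cc [Hc1 Hc2]].
    - intros z Hz. apply (cseg_sub 0 L); try lra. apply cont_seg_cseg; auto; lra.
    - intros z Hz. apply duT; lra.
    - rewrite Hc2, Rabs_mult. apply Rmult_le_compat_r. apply Rabs_pos. specialize (Hmax1 cc ltac:(lra)).
      unfold M1, Kt. simpl in Hmax1. lra. }
  assert (HuTlip : forall x y, 0 <= x <= L -> 0 <= y <= L -> Rabs (uT x - uT y) <= M1 * Rabs (x - y)).
  { intros x y Hx Hy. destruct (Rtotal_order y x) as [Hl|[He|Hg]].
    - apply HuTlip0; lra.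
    - subst. rewrite !Rminus_eq_0, Rabs_R0. lra.
    - rewrite Rabs_minus_sym, (Rabs_minus_sym x). apply HuTlip0; lra. }
  set (b := 2 / (2 + eps)). set (c := eps / (2 + eps)).
  assert (Hb : 0 < b < 1) by (unfold b; split; [apply Rdiv_lt_0_compat; lra| apply Rmult_lt_reg_r with (2 + eps); [lra|]; field_simplify; lra]).
  assert (Hc : 0 < c < 1) by (unfold c; split; [apply Rdiv_lt_0_compat; lra| apply Rmult_lt_reg_r with (2 + eps); [lra|]; field_simplify; lra]).
  set (Gmax := / 2 * (1 + M1 + M1)).
  set (Hm := Gmax ^ 2).
  assert (HHm : 0 <= Hm) by (apply pow2_ge_0).
  set (U := KU + L ^ 2 + (2 + Hm) * T).
  set (C2 := 1 + M1 ^ 2 / 4 + (r * U + Hm + 1) * sqrt T).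
  assert (HU0 : 0 <= U).
  { unfold U. assert (0 <= (2 + Hm) * T) by (apply Rmult_le_pos; lra). pose proof (pow2_ge_0 L). lra. }
  assert (HC2 : 0 <= C2).
  { unfold C2. assert (0 <= r * U) by (apply Rmult_le_pos; lra). pose proof (sqrt_pos T).
    assert (0 <= (r * U + Hm + 1) * sqrt T) by (apply Rmult_le_pos; lra). pose proof (pow2_ge_0 M1). lra. }
  exists (U + (M1 + C2) * Rmax 1 (T + L)).
  intros sigma Hsig u m Hsol. cbv zeta in Hsol. fold b c in Hsol.
  destruct Hsol as [ut [ux [uxx [mt [mx [mxx [Cu [Cut [Cux [Cuxx [Cm [Cmt [Cmx [Cmxx [Hder [Heu [Hem [Hinit [Hbcu Hbcm]]]]]]]]]]]]]]]]]]].
  assert (UCu := cont_rect_UC T L u ltac:(lra) ltac:(lra) Cu).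
  assert (UCut := cont_rect_UC T L ut ltac:(lra) ltac:(lra) Cut).
  assert (UCux := cont_rect_UC T L ux ltac:(lra) ltac:(lra) Cux).
  assert (UCuxx := cont_rect_UC T L uxx ltac:(lra) ltac:(lra) Cuxx).
  assert (UCm := cont_rect_UC T L m ltac:(lra) ltac:(lra) Cm).
  assert (UCmt := cont_rect_UC T L mt ltac:(lra) ltac:(lra) Cmt).
  assert (UCmx := cont_rect_UC T L mx ltac:(lra) ltac:(lra) Cmx).
  set (pi := fun t => RInt (fun y => ux t y * m t y) 0 L).
  assert (HG : forall t x, Gfun b c L ux m t x = / 2 * (b + c * pi t - ux t x)) by (intros; reflexivity).
  set (H := fun t p => (/ 2 * (b + c * pi t - p)) ^ 2).
  assert (Hus : usol L T r sigma u ut ux uxx H).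
  { split; [auto|]. split; [auto|]. split.
    - intros t x Ht Hx. destruct (Hder t x Ht Hx) as [D1 [D2 [D3 _]]]. auto.
    - split.
      + intros t x Ht Hx. specialize (Heu t x Ht Hx). rewrite HG in Heu. unfold H. lra.
      + exact Hbcu. }
  assert (Hlip := lip_full L T r sigma u ut ux uxx H M1 Hus HL HT Hr HM1).
  specialize (Hlip ltac:(intros x y Hx Hy; rewrite (proj2 (Hinit x Hx)), (proj2 (Hinit y Hy)); auto)).
  assert (Hux := ux_bound L T r sigma u ut ux uxx H M1 Hus HL HT ltac:(lra) Hlip).
  assert (UCum : UC 0 T 0 L (fun t x => ux t x * m t x)) by (apply UC_mult; auto; lra).
  destruct (UC_bound 0 T 0 L _ ltac:(lra) ltac:(lra) UCum) as [Bum [HBum0 HBum]].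
  destruct (UC_bound 0 T 0 L _ ltac:(lra) ltac:(lra) UCuxx) as [Buxx [HBuxx0 HBuxx]].
  assert (exum : forall t, 0 <= t <= T -> ex_RInt (fun y => ux t y * m t y) 0 L).
  { intros t Ht. apply ex_RInt_cseg; auto. intros z Hz. apply cseg_mult; apply (UC_cseg 0 T); auto. }
  assert (Hpi0 : forall t, 0 <= t <= T -> Rabs (pi t) <= L * Bum).
  { intros t Ht. unfold pi. replace (L * Bum) with ((L - 0) * Bum) by ring. apply abs_RInt_bound; auto.
    all: try (intros z Hz; apply HBum; auto). }
  set (Gb := / 2 * (b + c * (L * Bum) + M1)).
  assert (HGb0 : 0 <= Gb).
  { unfold Gb. assert (0 <= c * (L * Bum)) by (apply Rmult_le_pos; [lra|apply Rmult_le_pos; lra]). lra. }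
  assert (HGb : forall t x, 0 < t < T -> 0 <= x <= L -> Rabs (Gfun b c L ux m t x) <= Gb).
  { intros t x Ht Hx. rewrite HG. unfold Gb. rewrite Rabs_mult, Rabs_inv, Rabs_pos_eq by lra.
    apply Rmult_le_compat_l; [lra|]. specialize (Hpi0 t ltac:(lra)). specialize (Hux t x ltac:(lra) Hx).
    assert (Rabs (c * pi t) <= c * (L * Bum)) by (rewrite Rabs_mult, Rabs_pos_eq by lra; apply Rmult_le_compat_l; lra).
    eapply Rle_trans. apply Rabs_triang. eapply Rle_trans. apply Rplus_le_compat_r. apply Rabs_triang.
    rewrite Rabs_Ropp, Rabs_pos_eq with (x := b) by lra. lra. }
  assert (DG : forall t x, 0 < t < T -> 0 < x < L -> is_derive (fun y => Gfun b c L ux m t y) x (- / 2 * uxx t x)).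
  { intros t x Ht Hx. destruct (Hder t x Ht Hx) as [_ [_ [D _]]].
    apply (der_ext _ _ x _ _ (der_aff _ x _ (- / 2) 0 (/ 2 * (b + c * pi t)) D)).
    intros; rewrite HG; ring. simpl; ring. }
  assert (Hmeq : forall t x, 0 < t < T -> 0 < x < L ->
     mt t x = sigma ^ 2 / 2 * mxx t x + Gfun b c L ux m t x * mx t x + (- / 2 * uxx t x) * m t x).
  { intros t x Ht Hx. destruct (Hder t x Ht Hx) as [_ [_ [_ [_ [D _]]]]].
    pose proof (der_mul _ _ x _ _ (DG t x Ht Hx) D) as D2.
    pose proof (Hem t x Ht Hx) as D1.
    apply is_derive_unique in D1. apply is_derive_unique in D2. unfold b, c in D2. rewrite D1 in D2. simpl in D2.
    unfold b, c. lra. }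
  assert (Hmpos : forall t x, 0 <= t <= T -> 0 <= x <= L -> 0 <= m t x).
  { apply (m_nonneg L T sigma m mt mx mxx (fun t x => Gfun b c L ux m t x) (fun t x => - / 2 * uxx t x) Gb (/ 2 * Buxx)); auto; try lra.
    - intros t x Ht Hx. destruct (Hder t x Ht Hx) as [_ [_ [_ [D1 [D2 D3]]]]]. auto.
    - intros t x Ht Hx. rewrite Rabs_mult. rewrite Rabs_Ropp, Rabs_inv, Rabs_pos_eq by lra.
      apply Rmult_le_compat_l; [lra|]. apply HBuxx; lra.
    - intros t Ht. apply Hbcm. lra.
    - intros x Hx. rewrite (proj1 (Hinit x Hx)). auto. }
  assert (Hmass : forall t, 0 <= t <= T -> RInt (m t) 0 L = 1).
  { intros t Ht. rewrite <- Hm0_mass.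
    rewrite (mass_const L T m mt (fun t y => sigma ^ 2 / 2 * mx t y + Gfun b c L ux m t y * m t y)); auto.
    - apply RInt_ext. intros x Hx. rewrite Rmin_left, Rmax_right in Hx by lra. apply Hinit. lra.
    - intros t' x Ht' Hx. apply Hder; auto.
    - intros t' Ht'. split; [|split; [|split]].
      + intros z Hz. apply cseg_plus.
        * apply (cseg_ext _ _ (fun w => sigma ^ 2 / 2 * mx t' w + 0 * w + 0)). intros; ring. apply cseg_aff.
          apply (UC_cseg 0 T); auto; lra.
        * apply cseg_mult. apply (cseg_ext _ _ (fun w => (- / 2) * ux t' w + 0 * w + / 2 * (b + c * pi t'))).
          intros; rewrite HG; ring. apply cseg_aff. apply (UC_cseg 0 T); auto; lra.
          apply (UC_cseg 0 T); auto; lra.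
      + intros x Hx. destruct (Hder t' x Ht' Hx) as [_ [_ [_ [_ [_ D]]]]].
        apply (der_ext _ _ x _ _ (der_add _ _ x _ _ (der_aff _ x _ (sigma ^ 2 / 2) 0 0 D) (Hem t' x Ht' Hx))).
        intros; unfold b, c; ring. simpl; ring.
      + destruct (Hbcm t' ltac:(lra)) as [B0 _]. exact B0.
      + destruct (Hbcm t' ltac:(lra)) as [_ B1]. exact B1. }
  assert (Hpi : forall t, 0 <= t <= T -> Rabs (pi t) <= M1).
  { intros t Ht. assert (exm : ex_RInt (m t) 0 L) by (apply ex_RInt_cseg; auto; intros z Hz; apply (UC_cseg 0 T); auto).
    assert (Hup : pi t <= RInt (fun y => M1 * m t y) 0 L).
    { apply RInt_le; auto. lra. apply ex_RInt_scalR; auto.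
      intros y Hy. specialize (Hux t y Ht ltac:(lra)). specialize (Hmpos t y Ht ltac:(lra)).
      apply Rle_trans with (Rabs (ux t y) * m t y). apply Rmult_le_compat_r; auto. apply Rle_abs.
      apply Rmult_le_compat_r; auto. }
    assert (Hlo : RInt (fun y => (- M1) * m t y) 0 L <= pi t).
    { apply RInt_le; auto. lra. apply ex_RInt_scalR; auto.
      intros y Hy. specialize (Hux t y Ht ltac:(lra)). specialize (Hmpos t y Ht ltac:(lra)).
      assert (- M1 <= ux t y) by (unfold Rabs in Hux; destruct Rcase_abs in Hux; lra).
      apply Rmult_le_compat_r; auto. }
    rewrite RInt_scalR, Hmass in Hup, Hlo by auto.
    unfold Rabs; destruct Rcase_abs; lra. }
  assert (HGm : forall t x, 0 <= t <= T -> 0 <= x <= L -> Rabs (/ 2 * (b + c * pi t - ux t x)) <= Gmax).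
  { intros t x Ht Hx. unfold Gmax. rewrite Rabs_mult, Rabs_inv, Rabs_pos_eq by lra.
    apply Rmult_le_compat_l; [lra|]. specialize (Hpi t Ht). specialize (Hux t x Ht Hx).
    assert (Rabs (c * pi t) <= M1).
    { rewrite Rabs_mult, Rabs_pos_eq by lra. apply Rle_trans with (1 * Rabs (pi t)). apply Rmult_le_compat_r. apply Rabs_pos. lra. lra. }
    eapply Rle_trans. apply Rabs_triang. eapply Rle_trans. apply Rplus_le_compat_r. apply Rabs_triang.
    rewrite Rabs_Ropp, Rabs_pos_eq with (x := b) by lra. lra. }
  assert (HH : forall t x, 0 < t < T -> 0 < x < L -> 0 <= H t (ux t x) <= Hm).
  { intros t x Ht Hx. unfold H, Hm. split. apply pow2_ge_0.
    rewrite <- (pow2_abs (/ 2 * (b + c * pi t - ux t x))). apply pow_incr. split. apply Rabs_pos. apply HGm; lra. }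
  assert (Hubd := u_bounds L T r sigma u ut ux uxx H KU Hm Hus HL HT Hr Hsig HKU HHm).
  specialize (Hubd ltac:(intros x Hx; rewrite (proj2 (Hinit x Hx)); split; [apply HuT_pos; auto| apply Hmax2; auto]) HH).
  fold U in Hubd.
  assert (Hth := time_holder L T r sigma u ut ux uxx H M1 U Hm Hus HL HT Hr Hsig HM1 HHm Hlip Hubd HH).
  fold C2 in Hth.
  apply holder_assemble; auto; lra.
Qed.
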